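(* Let $H>0$, $g>0$, and let $\bar\rho$ be a smooth function on $[-H,0]$ for which there exist constants $c^*,c_*>0$ with $c_*\le \bar\rho\le c^*$ and $-\bar\rho'\ge c_*$ on $[-H,0]$. Let $N^2:=-g\bar\rho'/\bar\rho$, and let $(c_n,f_n)_{n\ge1}$ be the eigen-elements of the Sturm–Liouville problem described in the context. Define the operator $M$ on $\ell^2(\mathbb N^* )$ by $(Mu)_n=\sum_{m\ge1}M_{n,m}u_m$ with $$M_{n,m}:=c_nc_m\int_{-H}^0 f_n(r)f_m(r)\bar\rho(r)\,dr .$$ Then there exists $C>0$ such that: (i) $M$ is a bounded linear operator on $\ell^2(\mathbb N^* )$ and $|Mu|_{\ell^2}\le C\,|(c_nu_n)_n|_{\ell^2}$ for all $u\in\ell^2(\mathbb N^* )$; (ii) $M$ is symmetric: $\langle Mu,v\rangle=\langle u,Mv\rangle$ for all $u,v\in\ell^2(\mathbb N^* )$; (iii) $\langle Mu,u\rangle\ge \frac1C |(c_nu_n)_n|_{\ell^2}^2$ for all $u\in\ell^2(\mathbb N^* )$; (iv) consequently $M$ has a unique positive square root $M^{1/2}$ (i.e. $(M^{1/2})^2=M$), and it satisfies $\frac1C|(c_nu_n)_n|_{\ell^2}\le |M^{1/2}u|_{\ell^2}\le C|(c_nu_n)_n|_{\ell^2}$ for all $u\in\ell^2(\mathbb N^* )$; (v) if $N^2$ is constant (independent of $r$), then $M$ is diagonal with $M_{n,n}=c_n^2/N^2$ and $M_{n,m}=0$ for $n\ne m$.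
   Context: $\ell^2(\mathbb N^* )$ is the space of real square-summable sequences indexed by positive integers, with scalar product $\langle u,v\rangle=\sum_n u_nv_n$. For $n\ge1$, $c_n>0$ and $f_n$ are defined by the Sturm–Liouville eigenvalue problem $(\bar\rho f_n')'=-\bar\rho N^2\frac{1}{c_n^2}f_n$ on $(-H,0)$ with $f_n(-H)=f_n(0)=0$, where $(c_n)_{n\ge1}$ is ordered decreasingly and the family $(f_n)_{n\ge1}$ is normalized to be an orthonormal basis of the weighted space $L^2_{\bar\rho N^2}([-H,0])$ (scalar product $\int_{-H}^0 fg\,\bar\rho N^2$). *)

(* Defs.v *)
From Stdlib Require Import Reals.
From Coquelicot Require Import Coquelicot.
Open Scope R_scope.

(** Smoothness: all iterated derivatives exist everywhere (a smooth function on
    [-H,0] is the restriction of such a function, by Seeley/Whitney extension). *)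
Definition smooth (f : R -> R) : Prop :=
  forall (k : nat) (x : R), ex_derive (Derive_n f k) x.

Definition cont_on_cc (a b : R) (h : R -> R) : Prop :=
  forall x, a <= x <= b -> forall eps, 0 < eps ->
    exists delta, 0 < delta /\
      forall y, a <= y <= b -> Rabs (y - x) < delta -> Rabs (h y - h x) < eps.

Definition N2 (g : R) (rho : R -> R) (r : R) : R :=
  - g * Derive rho r / rho r.

Definition weight (g : R) (rho : R -> R) (r : R) : R := rho r * N2 g rho r.

(** (c_n, f_n)_{n>=1} (indexed here by n : nat, index n standing for n+1) are the
    eigen-elements of  (rho f')' = - rho N^2 c^{-2} f  on (-H,0), f(-H)=f(0)=0,
    with (c_n) positive, decreasing, and (f_n) an orthonormal basis of
    L^2_{rho N^2}([-H,0]).  Completeness is expressed by Parseval's identity for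
    every continuous function on [-H,0] (a dense subset of L^2). *)
Definition SL_eigen_family (H g : R) (rho : R -> R)
    (c : nat -> R) (f : nat -> R -> R) : Prop :=
  (forall n, 0 < c n) /\
  (forall n, c (S n) < c n) /\
  (forall n, cont_on_cc (- H) 0 (f n)) /\
  (forall n, f n (- H) = 0 /\ f n 0 = 0) /\
  (forall n x, - H < x < 0 -> ex_derive (f n) x) /\
  (forall n x, - H < x < 0 ->
     is_derive (fun y => rho y * Derive (f n) y) x
               (- (rho x * N2 g rho x * / (c n ^ 2) * f n x))) /\
  (forall n, RInt (fun r => f n r * f n r * weight g rho r) (- H) 0 = 1) /\
  (forall n m, n <> m ->
     RInt (fun r => f n r * f m r * weight g rho r) (- H) 0 = 0) /\
  (forall h : R -> R, cont_on_cc (- H) 0 h ->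
     is_series (fun n => (RInt (fun r => h r * f n r * weight g rho r) (- H) 0) ^ 2)
               (RInt (fun r => h r ^ 2 * weight g rho r) (- H) 0)).

Definition l2 (u : nat -> R) : Prop := ex_series (fun n => u n ^ 2).
Definition l2norm (u : nat -> R) : R := sqrt (Series (fun n => u n ^ 2)).
Definition l2inner (u v : nat -> R) : R := Series (fun n => u n * v n).

Definition cmul (c : nat -> R) (u : nat -> R) : nat -> R := fun n => c n * u n.

Definition Mentry (H : R) (rho : R -> R) (c : nat -> R) (f : nat -> R -> R)
    (n m : nat) : R :=
  c n * c m * RInt (fun r => f n r * f m r * rho r) (- H) 0.

Definition Mop (H : R) (rho : R -> R) (c : nat -> R) (f : nat -> R -> R)
    (u : nat -> R) : nat -> R :=
  fun n => Series (fun m => Mentry H rho c f n m * u m).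

(** Bounded, linear, symmetric, nonnegative ("positive") operator on l^2. *)
Definition pos_bounded_op (S : (nat -> R) -> (nat -> R)) : Prop :=
  (forall u, l2 u -> l2 (S u)) /\
  (forall u v a b, l2 u -> l2 v ->
     S (fun n => a * u n + b * v n) = (fun n => a * S u n + b * S v n)) /\
  (exists K, 0 <= K /\ forall u, l2 u -> l2norm (S u) <= K * l2norm u) /\
  (forall u v, l2 u -> l2 v -> l2inner (S u) v = l2inner u (S v)) /\
  (forall u, l2 u -> 0 <= l2inner (S u) u).

(* Main.v *)
Require Import Defs.
From Stdlib Require Import Reals Lra Psatz Lia List FunctionalExtensionality.
From Coquelicot Require Import Coquelicot.
Open Scope R_scope.

Lemma Series_zero : Series (fun _ => 0) = 0.
Proof.
  rewrite (Series_ext (fun _ => 0) (fun n => 0 * 1)) by (intros; ring).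
  rewrite Series_scal_l. ring.
Qed.

Lemma ex_series_Rle (a b : nat -> R) :
  (forall n, Rabs (a n) <= b n) -> ex_series b -> ex_series a.
Proof. intros H Hb. apply (ex_series_le a b); auto. Qed.

Lemma ex_series_Rplus (a b : nat -> R) :
  ex_series a -> ex_series b -> ex_series (fun n => a n + b n).
Proof. intros. apply (ex_series_plus a b); auto. Qed.

Lemma ex_series_Rscal (k : R) (a : nat -> R) :
  ex_series a -> ex_series (fun n => k * a n).
Proof. intros. apply (ex_series_scal_l k a); auto. Qed.

Lemma is_series_iff (a : nat -> R) (l : R) :
  is_series a l <-> is_lim_seq (fun N => sum_f_R0 a N) l.
Proof.
  split; intro H.
  - apply is_lim_seq_ext with (sum_n a). intro; apply sum_n_Reals. exact H.
  - apply is_lim_seq_ext with (u := fun N => sum_f_R0 a N) (v := sum_n a) in H.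
    exact H. intro; symmetry; apply sum_n_Reals.
Qed.

Lemma Series_ge0 (a : nat -> R) : (forall n, 0 <= a n) -> ex_series a -> 0 <= Series a.
Proof.
  intros H Hb. rewrite <- Series_zero. apply Series_le; auto. intros; split; auto; lra.
Qed.

Lemma psum_le_series (a : nat -> R) N :
  (forall n, 0 <= a n) -> ex_series a -> sum_f_R0 a N <= Series a.
Proof.
  intros Hp Hex.
  assert (Hl : is_lim_seq (fun N => sum_f_R0 a N) (Series a)).
  { apply is_series_iff. apply Series_correct; auto. }
  apply (is_lim_seq_incr_n _ N) in Hl.
  assert (Hk : forall k, sum_f_R0 a N <= sum_f_R0 a (k + N)).
  { induction k. simpl; lra. simpl. specialize (Hp (S (k+N))). lra. }
  apply (is_lim_seq_le (fun _ => sum_f_R0 a N) _ (sum_f_R0 a N) (Series a) Hk).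
  apply is_lim_seq_const. exact Hl.
Qed.

Lemma bounded_psum_series (a : nat -> R) K :
  (forall n, 0 <= a n) -> (forall N, sum_f_R0 a N <= K) -> ex_series a /\ Series a <= K.
Proof.
  intros Hp HK.
  assert (Hg : Un_growing (fun N => sum_f_R0 a N)).
  { intro n. simpl. specialize (Hp (S n)). lra. }
  assert (Hu : has_ub (fun N => sum_f_R0 a N)).
  { exists K. intros x [n ->]. apply HK. }
  destruct (growing_cv _ Hg Hu) as [l Hl].
  apply is_lim_seq_Reals in Hl.
  assert (Hs : is_series a l) by (apply is_series_iff; exact Hl).
  split. exists l; auto.
  rewrite (is_series_unique a l Hs).
  apply (is_lim_seq_le (fun N => sum_f_R0 a N) (fun _ => K) l K); auto. apply is_lim_seq_const.
Qed.

Lemma term_le_series (a : nat -> R) n :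
  (forall n, 0 <= a n) -> ex_series a -> a n <= Series a.
Proof.
  intros Hp Hex. apply Rle_trans with (sum_f_R0 a n).
  - destruct n. simpl; lra. rewrite tech5.
    assert (0 <= sum_f_R0 a n). { apply cond_pos_sum. auto. } lra.
  - apply psum_le_series; auto.
Qed.

Definition nsq (u : nat -> R) : R := Series (fun n => u n ^ 2).

Lemma l2_ext u v : (forall n, u n = v n) -> l2 u -> l2 v.
Proof. intros E H. unfold l2 in *. apply ex_series_ext with (fun n => u n ^ 2); auto.
  intro n; rewrite E; auto. Qed.

Lemma l2_prod u v : l2 u -> l2 v -> ex_series (fun n => u n * v n).
Proof.
  intros Hu Hv. apply ex_series_Rle with (fun n => / 2 * (u n ^ 2 + v n ^ 2)).
  - intro n. pose proof (pow2_ge_0 (u n - v n)); pose proof (pow2_ge_0 (u n + v n)).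
    apply Rabs_le. split; nra.
  - apply ex_series_Rscal, ex_series_Rplus; auto.
Qed.

Lemma l2_lin a b u v : l2 u -> l2 v -> l2 (fun n => a * u n + b * v n).
Proof.
  intros Hu Hv. unfold l2.
  apply ex_series_Rle with (fun n => 2 * a ^ 2 * u n ^ 2 + 2 * b ^ 2 * v n ^ 2).
  - intro n. pose proof (pow2_ge_0 (a * u n - b * v n)). pose proof (pow2_ge_0 (a * u n + b * v n)).
    rewrite Rabs_pos_eq by nra. nra.
  - apply ex_series_Rplus.
    apply (ex_series_Rscal (2 * a ^ 2) _ Hu).
    apply (ex_series_Rscal (2 * b ^ 2) _ Hv).
Qed.

Lemma sum_zero N : sum_f_R0 (fun _ => 0) N = 0.
Proof. induction N; simpl; auto; lra. Qed.

Lemma is_series_zero : is_series (fun _ => 0) 0.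
Proof. apply is_series_iff. apply is_lim_seq_ext with (fun _ => 0).
  intro; rewrite sum_zero; auto. apply is_lim_seq_const. Qed.

Lemma l2_zero : l2 (fun _ => 0).
Proof. unfold l2. exists 0. apply is_series_ext with (fun _ => 0).
  intros; simpl; ring. apply is_series_zero. Qed.

Lemma ip_sym u v : l2inner u v = l2inner v u.
Proof. unfold l2inner. apply Series_ext. intro; ring. Qed.

Lemma ip_lin_l a b u v w : l2 u -> l2 v -> l2 w ->
  l2inner (fun n => a * u n + b * v n) w = a * l2inner u w + b * l2inner v w.
Proof.
  intros Hu Hv Hw. unfold l2inner.
  rewrite (Series_ext _ (fun n => a * (u n * w n) + b * (v n * w n))) by (intro; ring).
  rewrite Series_plus. rewrite !Series_scal_l. auto.
  apply ex_series_Rscal, l2_prod; auto.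
  apply ex_series_Rscal, l2_prod; auto.
Qed.

Lemma ip_lin_r a b u v w : l2 u -> l2 v -> l2 w ->
  l2inner w (fun n => a * u n + b * v n) = a * l2inner w u + b * l2inner w v.
Proof.
  intros. rewrite ip_sym, ip_lin_l by auto. rewrite (ip_sym u), (ip_sym v). auto.
Qed.

Lemma nsq_ip u : nsq u = l2inner u u.
Proof. unfold nsq, l2inner. apply Series_ext. intro; ring. Qed.

Lemma nsq_ge0 u : l2 u -> 0 <= nsq u.
Proof. intro H. apply Series_ge0; auto. intro; apply pow2_ge_0. Qed.

Lemma nsq_lin a b u v : l2 u -> l2 v ->
  nsq (fun n => a * u n + b * v n) = a^2 * nsq u + 2 * a * b * l2inner u v + b^2 * nsq v.
Proof.
  intros Hu Hv. rewrite nsq_ip. rewrite ip_lin_l; auto. rewrite !ip_lin_r; auto.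
  rewrite !nsq_ip. rewrite (ip_sym v u). ring.
  all: try apply l2_lin; auto.
Qed.

Lemma discr a b c : (forall t, 0 <= a - 2 * b * t + c * t ^ 2) -> 0 <= c -> b ^ 2 <= a * c.
Proof.
  intros H Hc. destruct (Rle_lt_or_eq_dec 0 c Hc) as [Hc'|Hc'].
  - specialize (H (b / c)). 
    assert (E : a - 2 * b * (b / c) + c * (b / c) ^ 2 = (a * c - b ^ 2) / c) by (field; lra).
    rewrite E in H. 
    assert (0 <= a * c - b ^ 2).
    { apply Rmult_le_reg_r with (/ c). apply Rinv_0_lt_compat; auto. rewrite Rmult_0_l. exact H. }
    lra.
  - subst c. destruct (Req_dec b 0) as [->|Hb].
    + specialize (H 0). simpl in H. nra.
    + specialize (H ((a + 1) / (2 * b))).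
      assert (E : a - 2 * b * ((a + 1) / (2 * b)) + 0 * ((a + 1) / (2 * b)) ^ 2 = -1) by (field; auto).
      lra.
Qed.

Lemma CS u v : l2 u -> l2 v -> (l2inner u v) ^ 2 <= nsq u * nsq v.
Proof.
  intros Hu Hv. apply discr. intro t.
  pose proof (nsq_ge0 _ (l2_lin 1 (-t) u v Hu Hv)) as H.
  rewrite nsq_lin in H; auto. nra. apply nsq_ge0; auto.
Qed.

Lemma sq_abs_le x y : x ^ 2 <= y ^ 2 -> 0 <= y -> Rabs x <= y.
Proof.
  intros H Hy. destruct (Rle_or_lt (Rabs x) y) as [|Hlt]; auto.
  exfalso. assert (Rabs x ^ 2 = x ^ 2) by apply pow2_abs.
  assert (0 <= Rabs x) by apply Rabs_pos. nra.
Qed.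

Lemma sqrt_le_of x y : 0 <= y -> x <= y ^ 2 -> sqrt x <= y.
Proof.
  intros Hy H. rewrite <- (sqrt_pow2 y Hy). apply sqrt_le_1_alt. exact H.
Qed.

Lemma l2norm_ge0 u : 0 <= l2norm u.
Proof. apply sqrt_pos. Qed.

Lemma l2norm_sq u : l2 u -> l2norm u ^ 2 = nsq u.
Proof. intro H. unfold l2norm. rewrite <- Rsqr_pow2. apply Rsqr_sqrt. apply nsq_ge0; auto. Qed.

Lemma ip_abs u v : l2 u -> l2 v -> Rabs (l2inner u v) <= l2norm u * l2norm v.
Proof.
  intros Hu Hv. apply sq_abs_le. rewrite Rpow_mult_distr, !l2norm_sq; auto. apply CS; auto.
  apply Rmult_le_pos; apply l2norm_ge0.
Qed.

Lemma l2norm_lin a b u v : l2 u -> l2 v ->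
  l2norm (fun n => a * u n + b * v n) <= Rabs a * l2norm u + Rabs b * l2norm v.
Proof.
  intros Hu Hv. unfold l2norm at 1. fold (nsq (fun n => a * u n + b * v n)). apply sqrt_le_of.
  apply Rplus_le_le_0_compat; apply Rmult_le_pos; try apply Rabs_pos; apply l2norm_ge0.
  rewrite nsq_lin; auto.
  pose proof (ip_abs u v Hu Hv). pose proof (l2norm_sq u Hu). pose proof (l2norm_sq v Hv).
  assert (a ^ 2 = Rabs a ^ 2) by (symmetry; apply pow2_abs).
  assert (b ^ 2 = Rabs b ^ 2) by (symmetry; apply pow2_abs).
  assert (2 * a * b * l2inner u v <= 2 * Rabs a * Rabs b * (l2norm u * l2norm v)).
  { apply Rle_trans with (Rabs (2 * a * b * l2inner u v)). apply Rle_abs.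
    rewrite !Rabs_mult. rewrite (Rabs_pos_eq 2) by lra.
    apply Rmult_le_compat_l. repeat apply Rmult_le_pos; try lra; apply Rabs_pos. auto. }
  nra.
Qed.

Lemma coord_le u n : l2 u -> Rabs (u n) <= l2norm u.
Proof.
  intro Hu. apply sq_abs_le. rewrite l2norm_sq by auto. apply term_le_series with (a := fun n => u n ^ 2); auto.
  intro; apply pow2_ge_0. apply l2norm_ge0.
Qed.

Lemma psum_le_nsq u P : l2 u -> sum_f_R0 (fun n => u n ^ 2) P <= nsq u.
Proof. intro. apply psum_le_series; auto. intro; apply pow2_ge_0. Qed.

Lemma lim_psum (w : nat -> nat -> R) (v : nat -> R) P :
  (forall n, is_lim_seq (fun N => w N n) (v n)) ->
  is_lim_seq (fun N => sum_f_R0 (fun n => w N n ^ 2) P) (sum_f_R0 (fun n => v n ^ 2) P).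
Proof.
  intro H. induction P.
  - simpl. apply is_lim_seq_ext with (fun N => w N 0%nat * (w N 0%nat * 1)). intro; ring.
    replace (v 0%nat * (v 0%nat * 1)) with (v 0%nat * (v 0%nat * 1)) by ring.
    apply is_lim_seq_mult'. auto. apply is_lim_seq_mult'; auto. apply is_lim_seq_const.
  - simpl. apply is_lim_seq_plus'. auto.
    apply is_lim_seq_mult'. auto. apply is_lim_seq_mult'; auto. apply is_lim_seq_const.
Qed.

Lemma fatou (w : nat -> nat -> R) (v : nat -> R) K :
  (forall n, is_lim_seq (fun N => w N n) (v n)) ->
  (forall N P, sum_f_R0 (fun n => w N n ^ 2) P <= K) -> l2 v /\ nsq v <= K.
Proof.
  intros Hl HK. apply bounded_psum_series. intro; apply pow2_ge_0.
  intro P. apply (is_lim_seq_le _ (fun _ => K) (sum_f_R0 (fun n => v n ^ 2) P) K (fun N => HK N P)).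
  apply lim_psum; auto. apply is_lim_seq_const.
Qed.

Lemma fatou_norm (w : nat -> nat -> R) (v : nat -> R) K :
  0 <= K ->
  (forall n, is_lim_seq (fun N => w N n) (v n)) ->
  (forall N, l2 (w N) /\ l2norm (w N) <= K) -> l2 v /\ l2norm v <= K.
Proof.
  intros HK0 Hl HK.
  destruct (fatou w v (K ^ 2) Hl) as [H1 H2].
  { intros N P. destruct (HK N) as [Ha Hb]. apply Rle_trans with (nsq (w N)).
    apply psum_le_nsq; auto. rewrite <- l2norm_sq by auto. 
    pose proof (l2norm_ge0 (w N)). nra. }
  split; auto. apply sqrt_le_of; auto.
Qed.

Lemma nsq_zero_pt w : l2 w -> nsq w = 0 -> forall n, w n = 0.
Proof.
  intros Hw H0 n. pose proof (term_le_series (fun n => w n ^ 2) n) as T.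
  assert (w n ^ 2 <= 0). { rewrite <- H0. apply T; auto. intro; apply pow2_ge_0. }
  nra.
Qed.

Lemma norm_zero_eq w : l2 w -> l2norm w = 0 -> forall n, w n = 0.
Proof.
  intros Hw H. apply nsq_zero_pt; auto. rewrite <- l2norm_sq, H by auto. ring.
Qed.

Lemma small_le x y (e : nat -> R) : is_lim_seq e 0 -> (forall N, x <= y + e N) -> x <= y.
Proof.
  intros He H.
  assert (Hl : is_lim_seq (fun N => y + e N) (y + 0)) by (apply is_lim_seq_plus'; auto; apply is_lim_seq_const).
  pose proof (is_lim_seq_le (fun _ => x) (fun N => y + e N) x (y + 0) H (is_lim_seq_const x) Hl).
  simpl in H0. lra.
Qed.

(* coefficients of sqrt(1-x) *)
Fixpoint beta (k : nat) : R :=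
  match k with
  | O => 1
  | S j => beta j * (INR j - / 2) / (INR j + 1)
  end.

Definition gam (N : nat) : R := sum_f_R0 beta N.

Lemma beta_S k : beta (S k) = beta k * (INR k - / 2) / (INR k + 1).
Proof. reflexivity. Qed.

Lemma gam_beta N : gam N = - 2 * (INR N + 1) * beta (S N).
Proof.
  unfold gam. induction N.
  - simpl. field.
  - rewrite tech5, IHN. rewrite (beta_S (S N)). rewrite !S_INR.
    assert (0 <= INR N) by apply pos_INR. field. lra.
Qed.

Lemma gam_S N : gam (S N) = gam N * (2 * INR N + 1) / (2 * INR N + 2).
Proof.
  rewrite !gam_beta. rewrite (beta_S (S N)). rewrite !S_INR.
  assert (0 <= INR N) by apply pos_INR. field. lra.
Qed.

Lemma gam_pos N : 0 < gam N.
Proof.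
  induction N. unfold gam; simpl; lra.
  rewrite gam_S. assert (0 <= INR N) by apply pos_INR.
  apply Rdiv_lt_0_compat; [apply Rmult_lt_0_compat|]; lra.
Qed.

Lemma gam_decr N : gam (S N) <= gam N.
Proof.
  rewrite gam_S. pose proof (gam_pos N). assert (0 <= INR N) by apply pos_INR.
  apply Rmult_le_reg_r with (2 * INR N + 2). lra.
  unfold Rdiv. rewrite Rmult_assoc, Rinv_l by lra. nra.
Qed.

Lemma gam_decr_le N M : (N <= M)%nat -> gam M <= gam N.
Proof.
  induction 1. lra. pose proof (gam_decr m). lra.
Qed.

Lemma gam_sq N : gam N ^ 2 * (2 * INR N + 1) <= 1.
Proof.
  induction N. unfold gam; simpl; lra.
  rewrite gam_S, S_INR. assert (0 <= INR N) by apply pos_INR.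
  set (x := INR N) in *. set (g := gam N) in *.
  assert (E : (g * (2 * x + 1) / (2 * x + 2)) ^ 2 * (2 * (x + 1) + 1)
            = g ^ 2 * (2 * x + 1) * ((2 * x + 1) * (2 * x + 3) / (2 * x + 2) ^ 2)) by (field; lra).
  rewrite E.
  assert (0 <= (2 * x + 1) * (2 * x + 3) / (2 * x + 2) ^ 2 <= 1).
  { split. apply Rdiv_le_0_compat; nra.
    apply Rmult_le_reg_r with ((2 * x + 2) ^ 2). nra.
    unfold Rdiv. rewrite Rmult_assoc, Rinv_l by nra. nra. }
  pose proof (pow2_ge_0 g). nra.
Qed.

Lemma gam_lim : is_lim_seq gam 0.
Proof.
  apply is_lim_seq_spec. intro eps.
  destruct (archimed_cor1 (eps ^ 2)) as [N [HN HN0]].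
  { pose proof (cond_pos eps). nra. }
  exists N. intros n Hn. rewrite Rminus_0_r.
  pose proof (gam_pos n). rewrite Rabs_pos_eq by lra.
  pose proof (gam_sq n). pose proof (cond_pos eps).
  assert (INR N <= INR n) by (apply le_INR; lia).
  assert (0 < INR N) by (apply lt_0_INR; lia).
  assert (gam n ^ 2 < eps ^ 2).
  { assert (gam n ^ 2 * INR N <= 1) by nra.
    apply Rle_lt_trans with (/ INR N); auto.
    apply Rmult_le_reg_r with (INR N); auto. rewrite Rinv_l by lra. auto. }
  destruct (Rlt_or_le (gam n) eps); auto. nra.
Qed.

Lemma beta_nonpos k : (1 <= k)%nat -> beta k <= 0.
Proof.
  induction 1. simpl. lra.
  rewrite beta_S. assert (1 <= INR m) by (apply (le_INR 1); auto).
  assert (0 < (INR m - / 2) / (INR m + 1)) by (apply Rdiv_lt_0_compat; lra).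
  unfold Rdiv in *. rewrite Rmult_assoc. nra.
Qed.

Lemma abs_beta_S k : Rabs (beta (S k)) = gam k - gam (S k).
Proof.
  rewrite Rabs_left1 by (apply beta_nonpos; lia).
  unfold gam. rewrite tech5. ring.
Qed.

Lemma sum_abs_beta N : sum_f_R0 (fun k => Rabs (beta k)) N = 2 - gam N.
Proof.
  induction N. unfold gam; simpl. rewrite Rabs_R1. lra.
  rewrite tech5. rewrite IHN. rewrite abs_beta_S. ring.
Qed.

Lemma sum_abs_beta_tail N M : (N <= M)%nat ->
  sum_f_R0 (fun k => Rabs (beta k)) M - sum_f_R0 (fun k => Rabs (beta k)) N = gam N - gam M.
Proof. intros. rewrite !sum_abs_beta. ring. Qed.

Lemma ex_series_abs_beta : ex_series (fun k => Rabs (beta k)).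
Proof.
  exists 2. apply is_series_iff.
  assert (H : is_lim_seq (fun N => 2 + -1 * gam N) (2 + -1 * 0)).
  { apply is_lim_seq_plus'. apply is_lim_seq_const. apply is_lim_seq_mult'. apply is_lim_seq_const. apply gam_lim. }
  replace (2 + -1 * 0) with 2 in H by ring.
  apply is_lim_seq_ext with (fun N => 2 + -1 * gam N); auto. intro; rewrite sum_abs_beta; ring.
Qed.

Definition pconv (n : nat) : R := sum_f_R0 (fun i => beta i * beta (n - i)) n.

Lemma beta_rec k : (INR k + 1) * beta (S k) = (INR k - / 2) * beta k.
Proof. rewrite beta_S. assert (0 <= INR k) by apply pos_INR. field. lra. Qed.

Definition Aconv (n : nat) : R := sum_f_R0 (fun i => INR i * beta i * beta (n - i)) n.

Lemma Aconv_sym n : 2 * Aconv n = INR n * pconv n.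
Proof.
  unfold Aconv, pconv.
  assert (E : sum_f_R0 (fun i => INR i * beta i * beta (n - i)) n
            = sum_f_R0 (fun i => INR (n - i) * beta (n - i) * beta i) n).
  { rewrite <- (sum_f_R0_skip (fun i => INR i * beta i * beta (n - i))).
    apply sum_eq. intros i Hi. replace (n - (n - i))%nat with i by lia. auto. }
  assert (E2 : sum_f_R0 (fun i => INR (n - i) * beta (n - i) * beta i) n
             = sum_f_R0 (fun i => (INR n - INR i) * beta i * beta (n - i)) n).
  { apply sum_eq. intros i Hi. rewrite minus_INR by lia. ring. }
  replace (2 * sum_f_R0 (fun i => INR i * beta i * beta (n - i)) n)
    with (sum_f_R0 (fun i => INR i * beta i * beta (n - i)) n
          + sum_f_R0 (fun i => (INR n - INR i) * beta i * beta (n - i)) n)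
    by (rewrite <- E2, <- E; ring).
  rewrite <- plus_sum. rewrite scal_sum. apply sum_eq. intros; ring.
Qed.

Lemma Aconv_S n : Aconv (S n) = Aconv n - / 2 * pconv n.
Proof.
  unfold Aconv, pconv. rewrite decomp_sum by lia. simpl pred.
  rewrite Rmult_0_l, Rmult_0_l, Rplus_0_l.
  rewrite scal_sum.
  replace (sum_f_R0 (fun i => INR i * beta i * beta (n - i)) n -
     sum_f_R0 (fun i => beta i * beta (n - i) * / 2) n)
   with (sum_f_R0 (fun i => INR i * beta i * beta (n - i) + (-1) * (beta i * beta (n - i) * / 2)) n).
  2:{ rewrite plus_sum.
       assert (E : sum_f_R0 (fun i => -1 * (beta i * beta (n - i) * / 2)) n
                 = -1 * sum_f_R0 (fun i => beta i * beta (n - i) * / 2) n).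
       { rewrite scal_sum. apply sum_eq. intros; ring. }
       rewrite E. ring. }
  apply sum_eq. intros i Hi.
  replace (S n - S i)%nat with (n - i)%nat by lia.
  rewrite S_INR.
  replace ((INR i + 1) * beta (S i) * beta (n - i)) with (((INR i + 1) * beta (S i)) * beta (n - i)) by ring.
  rewrite beta_rec. ring.
Qed.

Lemma pconv_S n : (INR n + 1) * pconv (S n) = (INR n - 1) * pconv n.
Proof.
  pose proof (Aconv_sym (S n)). pose proof (Aconv_sym n). rewrite Aconv_S in H.
  rewrite S_INR in H. lra.
Qed.

Lemma pconv_0 : pconv 0 = 1.
Proof. unfold pconv. simpl. lra. Qed.
Lemma pconv_1 : pconv 1 = -1.
Proof. unfold pconv. simpl. field. Qed.
Lemma pconv_ge2 n : (2 <= n)%nat -> pconv n = 0.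
Proof.
  induction 1.
  - pose proof (pconv_S 1). rewrite pconv_1 in H. simpl INR in H. lra.
  - pose proof (pconv_S m). rewrite IHle in H0.
    assert (0 <= INR m) by apply pos_INR.
    apply Rmult_eq_reg_l with (INR m + 1). lra. lra.
Qed.

Definition op := (nat -> R) -> (nat -> R).
Definition lin_op (T : op) := forall u v a b, l2 u -> l2 v ->
  T (fun n => a * u n + b * v n) = (fun n => a * T u n + b * T v n).
Definition l2_op (T : op) := forall u, l2 u -> l2 (T u).
Definition bnd (T : op) K := forall u, l2 u -> l2norm (T u) <= K * l2norm u.
Definition sym_op (T : op) := forall u v, l2 u -> l2 v -> l2inner (T u) v = l2inner u (T v).
Definition pos_op (T : op) := forall u, l2 u -> 0 <= l2inner (T u) u.

Lemma l2_scal a u : l2 u -> l2 (fun n => a * u n).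
Proof. intro. apply l2_ext with (fun n => a * u n + 0 * u n). intro; ring. apply l2_lin; auto. Qed.
Lemma l2_add u v : l2 u -> l2 v -> l2 (fun n => u n + v n).
Proof. intros. apply l2_ext with (fun n => 1 * u n + 1 * v n). intro; ring. apply l2_lin; auto. Qed.
Lemma l2_sub u v : l2 u -> l2 v -> l2 (fun n => u n - v n).
Proof. intros. apply l2_ext with (fun n => 1 * u n + (-1) * v n). intro; ring. apply l2_lin; auto. Qed.

Lemma l2_sum (w : nat -> nat -> R) (c : nat -> R) N :
  (forall k, l2 (w k)) -> l2 (fun n => sum_f_R0 (fun k => c k * w k n) N).
Proof.
  intro H. induction N; simpl.
  - apply l2_scal; auto.
  - apply l2_add; auto. apply l2_scal; auto.
Qed.

Section LinOp.
Variable T : op.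
Hypothesis Tl2 : l2_op T.
Hypothesis Tlin : lin_op T.

Lemma T_scal a u : l2 u -> T (fun n => a * u n) = (fun n => a * T u n).
Proof.
  intro Hu. replace (fun n => a * u n) with (fun n => a * u n + 0 * u n)
    by (apply functional_extensionality; intro; ring).
  rewrite Tlin by auto. apply functional_extensionality; intro; ring.
Qed.

Lemma T_add u v : l2 u -> l2 v -> T (fun n => u n + v n) = (fun n => T u n + T v n).
Proof.
  intros Hu Hv. replace (fun n => u n + v n) with (fun n => 1 * u n + 1 * v n)
    by (apply functional_extensionality; intro; ring).
  rewrite Tlin by auto. apply functional_extensionality; intro; ring.
Qed.

Lemma T_sub u v : l2 u -> l2 v -> T (fun n => u n - v n) = (fun n => T u n - T v n).
Proof.
  intros Hu Hv. replace (fun n => u n - v n) with (fun n => 1 * u n + (-1) * v n)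
    by (apply functional_extensionality; intro; ring).
  rewrite Tlin by auto. apply functional_extensionality; intro; ring.
Qed.

Lemma T_sum (w : nat -> nat -> R) (c : nat -> R) N :
  (forall k, l2 (w k)) ->
  T (fun n => sum_f_R0 (fun k => c k * w k n) N) = (fun n => sum_f_R0 (fun k => c k * T (w k) n) N).
Proof.
  intro H. induction N; simpl.
  - apply T_scal; auto.
  - rewrite T_add, IHN, T_scal; auto. apply l2_sum; auto. apply l2_scal; auto.
Qed.
End LinOp.

Lemma pos_CS (P : op) x y : l2_op P -> lin_op P -> sym_op P -> pos_op P -> l2 x -> l2 y ->
  (l2inner (P x) y) ^ 2 <= l2inner (P x) x * l2inner (P y) y.
Proof.
  intros Pl2 Plin Psym Ppos Hx Hy.
  apply discr. 2:{ apply Ppos; auto. }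
  intro t. pose proof (Ppos _ (l2_lin 1 (-t) x y Hx Hy)) as H.
  rewrite Plin in H by auto. rewrite ip_lin_l in H; auto. rewrite !ip_lin_r in H; auto.
  rewrite (Psym y x) in H by auto. rewrite (ip_sym y (P x)) in H.
  replace (l2inner (P x) x - 2 * l2inner (P x) y * t + l2inner (P y) y * t ^ 2)
    with (1 * (1 * l2inner (P x) x + - t * l2inner (P x) y) +
    - t * (1 * l2inner (P x) y + - t * l2inner (P y) y)) by ring. exact H.
  all: try apply l2_lin; auto.
Qed.

Lemma T_zero (T : op) : lin_op T -> T (fun _ => 0) = (fun _ => 0).
Proof.
  intro Tlin. pose proof (Tlin (fun _ => 0) (fun _ => 0) 0 0 l2_zero l2_zero) as H.
  cbv beta in H. replace (fun n : nat => 0 * 0 + 0 * 0) with (fun _ : nat => 0) in H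
    by (apply functional_extensionality; intro; ring).
  rewrite H. apply functional_extensionality; intro; ring.
Qed.

Lemma l2norm_ext u v : (forall n, u n = v n) -> l2norm u = l2norm v.
Proof. intro E. unfold l2norm. f_equal. apply Series_ext. intro; rewrite E; auto. Qed.

Lemma l2norm_zero : l2norm (fun _ => 0) = 0.
Proof.
  unfold l2norm. rewrite (Series_ext _ (fun _ => 0)) by (intro; simpl; ring).
  rewrite Series_zero. apply sqrt_0.
Qed.

Lemma ip_sum (w : nat -> nat -> R) (c : nat -> R) v N :
  (forall k, l2 (w k)) -> l2 v ->
  l2inner (fun n => sum_f_R0 (fun k => c k * w k n) N) v = sum_f_R0 (fun k => c k * l2inner (w k) v) N.
Proof.
  intros H Hv. induction N; simpl.
  - replace (fun n => c 0%nat * w 0%nat n) with (fun n => c 0%nat * w 0%nat n + 0 * w 0%nat n)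
      by (apply functional_extensionality; intro; ring).
    rewrite ip_lin_l by auto. ring.
  - replace (fun n => sum_f_R0 (fun k => c k * w k n) N + c (S N) * w (S N) n)
      with (fun n => 1 * sum_f_R0 (fun k => c k * w k n) N + c (S N) * w (S N) n)
      by (apply functional_extensionality; intro; ring).
    rewrite ip_lin_l; auto. rewrite IHN. ring. apply l2_sum; auto.
Qed.

Lemma small_norm w (e : nat -> R) : l2 w -> is_lim_seq e 0 ->
  (forall N, l2norm w <= e N) -> forall n, w n = 0.
Proof.
  intros Hw He H. apply norm_zero_eq; auto.
  assert (l2norm w <= 0). { apply (small_le _ 0 e He). intro N. rewrite Rplus_0_l. auto. }
  pose proof (l2norm_ge0 w). lra.
Qed.

Lemma small_abs x (e : nat -> R) : is_lim_seq e 0 -> (forall N, Rabs x <= e N) -> x = 0.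
Proof.
  intros He H. assert (Rabs x <= 0). { apply (small_le _ 0 e He). intro N. rewrite Rplus_0_l. auto. }
  pose proof (Rabs_pos x). destruct (Req_dec x 0); auto. pose proof (Rabs_pos_lt x H2). lra.
Qed.

Lemma lim_scal_gam (k : R) : is_lim_seq (fun N => k * gam N) 0.
Proof.
  replace 0 with (k * 0) by ring. apply is_lim_seq_mult'. apply is_lim_seq_const. apply gam_lim.
Qed.

Lemma lim_scal_gamS (k : R) : is_lim_seq (fun N => k * gam (S N)) 0.
Proof. apply (is_lim_seq_incr_1 (fun N => k * gam N)). apply lim_scal_gam. Qed.

Fixpoint padd (p q : list R) : list R :=
  match p with
  | nil => q
  | a :: p' => match q with nil => p | b :: q' => (a + b) :: padd p' q' end
  end.
Definition pscal (a : R) (p : list R) : list R := map (fun x => a * x) p.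
Fixpoint pmul (p q : list R) : list R :=
  match p with nil => nil | a :: p' => padd (pscal a q) (0 :: pmul p' q) end.
Definition sabs (p : list R) : R := fold_right (fun a s => Rabs a + s) 0 p.
Definition pval (p : list R) : R := fold_right Rplus 0 p.

Lemma nth_padd p q n : nth n (padd p q) 0 = nth n p 0 + nth n q 0.
Proof.
  revert q n. induction p; intros q n; simpl. destruct n; ring.
  destruct q. destruct n; simpl; ring. destruct n; simpl. ring. apply IHp.
Qed.

Lemma nth_pscal a p n : nth n (pscal a p) 0 = a * nth n p 0.
Proof. revert n. induction p; intro n; destruct n; simpl; try ring. apply IHp. Qed.

Lemma nth_pmul p q n : nth n (pmul p q) 0 = sum_f_R0 (fun i => nth i p 0 * nth (n - i) q 0) n.
Proof.
  revert n. induction p; intro n; simpl.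
  - symmetry. rewrite (sum_eq _ (fun _ => 0)). rewrite sum_zero. destruct n; auto.
    intros i _. destruct i; simpl; ring.
  - rewrite nth_padd, nth_pscal. destruct n.
    + simpl. ring.
    + simpl nth at 2. rewrite IHp. rewrite (decomp_sum _ (S n)) by lia. simpl pred. reflexivity.
Qed.

Lemma pval_padd p q : pval (padd p q) = pval p + pval q.
Proof. revert q. induction p; intro q; simpl. ring. destruct q; simpl. ring. rewrite IHp. ring. Qed.
Lemma pval_pscal a p : pval (pscal a p) = a * pval p.
Proof. induction p; simpl. ring. rewrite IHp. ring. Qed.
Lemma pval_pmul p q : pval (pmul p q) = pval p * pval q.
Proof. induction p; simpl. ring. rewrite pval_padd, pval_pscal. simpl. rewrite IHp. ring. Qed.

Lemma sabs_nonneg r : (forall k, 0 <= nth k r 0) -> sabs r = pval r.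
Proof.
  induction r; intro H; simpl. auto. rewrite IHr. rewrite Rabs_pos_eq. auto.
  apply (H 0%nat). intro k. apply (H (S k)).
Qed.

Lemma sabs_ge0 r : 0 <= sabs r.
Proof. induction r; simpl. lra. pose proof (Rabs_pos a). lra. Qed.

Lemma nth_map_seq (h : nat -> R) j L i :
  nth i (map h (seq j L)) 0 = if (i <? L)%nat then h (j + i)%nat else 0.
Proof.
  revert j i. induction L; intros j i; simpl. destruct i; auto.
  destruct i. simpl. rewrite Nat.add_0_r. auto.
  rewrite IHL. simpl. rewrite Nat.add_succ_r. auto.
Qed.

Lemma pval_map_seq (h : nat -> R) j N :
  pval (map h (seq j (S N))) = sum_f_R0 (fun k => h (j + k)%nat) N.
Proof.
  revert j. induction N; intro j. simpl. rewrite Nat.add_0_r. ring.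
  change (h j + pval (map h (seq (S j) (S N))) = sum_f_R0 (fun k => h (j + k)%nat) (S N)).
  rewrite IHN. rewrite (decomp_sum (fun k => h (j + k)%nat) (S N)) by lia. simpl pred.
  rewrite Nat.add_0_r. f_equal. apply sum_eq. intros. rewrite Nat.add_succ_r. auto.
Qed.

Section SQ.
Variable B : op.
Hypothesis Bl2 : l2_op B.
Hypothesis Blin : lin_op B.
Hypothesis Bn : bnd B 1.
Hypothesis Bsym : sym_op B.

Fixpoint Bpow (k : nat) (u : nat -> R) : nat -> R :=
  match k with O => u | S j => B (Bpow j u) end.

Lemma Bpow_l2 k : l2_op (Bpow k).
Proof. induction k; intros u Hu; simpl; auto. Qed.

Lemma Bpow_lin k : lin_op (Bpow k).
Proof.
  induction k; intros u v a b Hu Hv; simpl; auto.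
  rewrite IHk by auto. apply Blin; apply Bpow_l2; auto.
Qed.

Lemma Bpow_n k u : l2 u -> l2norm (Bpow k u) <= l2norm u.
Proof.
  induction k; intro Hu; simpl. lra.
  eapply Rle_trans. apply Bn. apply Bpow_l2; auto. rewrite Rmult_1_l. auto.
Qed.

Lemma Bpow_sym k : sym_op (Bpow k).
Proof.
  induction k; intros u v Hu Hv; simpl. auto.
  rewrite Bsym by (try apply Bpow_l2; auto). rewrite IHk by (try apply Bl2; auto).
  f_equal. clear. induction k; simpl; auto. rewrite IHk; auto.
Qed.

Lemma Bpow_ip_le k u : l2 u -> l2inner (Bpow k u) u <= nsq u.
Proof.
  intro Hu. eapply Rle_trans. apply Rle_abs. eapply Rle_trans. apply ip_abs; auto. apply Bpow_l2; auto.
  rewrite <- l2norm_sq by auto. pose proof (Bpow_n k u Hu). pose proof (l2norm_ge0 u).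
  pose proof (l2norm_ge0 (Bpow k u)). nra.
Qed.

Fixpoint ev (p : list R) (u : nat -> R) : nat -> R :=
  match p with
  | nil => fun _ => 0
  | a :: q => fun n => a * u n + B (ev q u) n
  end.

Lemma ev_l2 p : l2_op (ev p).
Proof.
  induction p; intros u Hu; simpl. apply l2_zero.
  apply l2_ext with (fun n => a * u n + 1 * B (ev p u) n). intro; ring.
  apply l2_lin; auto.
Qed.

Lemma ev_lin p : lin_op (ev p).
Proof.
  induction p; intros u v x y Hu Hv; simpl.
  apply functional_extensionality; intro; ring.
  rewrite IHp by auto. rewrite Blin by (apply ev_l2; auto).
  apply functional_extensionality; intro; ring.
Qed.

Lemma ev_padd p q u : l2 u -> ev (padd p q) u = (fun n => ev p u n + ev q u n).
Proof.
  intro Hu. revert q. induction p; intro q; simpl.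
  apply functional_extensionality; intro; ring.
  destruct q; simpl. apply functional_extensionality; intro; ring.
  rewrite IHp. rewrite T_add; auto; try apply ev_l2; auto.
  apply functional_extensionality; intro; ring.
Qed.

Lemma ev_pscal a p u : l2 u -> ev (pscal a p) u = (fun n => a * ev p u n).
Proof.
  intro Hu. induction p; simpl. apply functional_extensionality; intro; ring.
  change (ev (pscal a p) u) with (ev (pscal a p) u). rewrite IHp.
  rewrite T_scal; auto; try apply ev_l2; auto.
  apply functional_extensionality; intro; ring.
Qed.

Lemma ev_pmul p q u : l2 u -> ev (pmul p q) u = ev p (ev q u).
Proof.
  intro Hu. induction p; simpl. auto.
  rewrite ev_padd, ev_pscal by auto. simpl. rewrite IHp.
  apply functional_extensionality; intro; ring.
Qed.

Lemma ev_norm p u : l2 u -> l2norm (ev p u) <= sabs p * l2norm u.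
Proof.
  intro Hu. induction p; simpl.
  - rewrite l2norm_zero. lra.
  - rewrite (l2norm_ext _ (fun n => a * u n + 1 * B (ev p u) n)) by (intro; ring).
    eapply Rle_trans. apply l2norm_lin; auto. apply Bl2, ev_l2; auto.
    rewrite Rabs_R1, Rmult_1_l. pose proof (Bn (ev p u) (ev_l2 p u Hu)). lra.
Qed.

Lemma ev_map_seq (h : nat -> R) j N u : l2 u ->
  ev (map h (seq j (S N))) u = (fun n => sum_f_R0 (fun k => h (j + k)%nat * Bpow k u n) N).
Proof.
  intro Hu. revert j. induction N; intro j.
  - simpl. rewrite T_zero by auto. apply functional_extensionality; intro. rewrite Nat.add_0_r. ring.
  - change (ev (h j :: map h (seq (S j) (S N))) u = (fun n => sum_f_R0 (fun k => h (j + k)%nat * Bpow k u n) (S N))).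
    cbn [ev]. rewrite IHN. rewrite (T_sum B Blin (fun k => Bpow k u)).
    2: intro; apply Bpow_l2; auto.
    apply functional_extensionality; intro n.
    rewrite (decomp_sum _ (S N)) by lia. simpl pred. rewrite Nat.add_0_r. simpl Bpow at 1.
    f_equal. apply sum_eq. intros i Hi. rewrite Nat.add_succ_r. simpl. auto.
Qed.

Definition Q (N : nat) (u : nat -> R) : nat -> R :=
  fun n => sum_f_R0 (fun k => beta k * Bpow k u n) N.

Lemma Q_ev N u : l2 u -> Q N u = ev (map beta (seq 0 (S N))) u.
Proof. intro Hu. rewrite ev_map_seq by auto. reflexivity. Qed.

Lemma Q_l2 N : l2_op (Q N).
Proof. intros u Hu. unfold Q. apply l2_sum. intro; apply Bpow_l2; auto. Qed.

Lemma Q_lin N : lin_op (Q N).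
Proof.
  intros u v a b Hu Hv. rewrite !Q_ev; auto. apply ev_lin; auto. apply l2_lin; auto.
Qed.

Lemma QQ N u : (1 <= N)%nat -> l2 u -> exists r, sabs r = gam N ^ 2 /\
   Q N (Q N u) = (fun n => u n - B u n + B (B (ev r u)) n).
Proof.
  intros HN Hu. set (s := map beta (seq 0 (S N))).
  rewrite (Q_ev N (Q N u)) by (apply Q_l2; auto). rewrite (Q_ev N u) by auto. fold s.
  rewrite <- ev_pmul by auto.
  assert (Hs : forall i, nth i s 0 = if (i <? S N)%nat then beta i else 0).
  { intro i. unfold s. rewrite nth_map_seq. auto. }
  assert (Hlow : forall n, (n <= N)%nat -> nth n (pmul s s) 0 = pconv n).
  { intros n Hn. rewrite nth_pmul. unfold pconv. apply sum_eq. intros i Hi.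
    rewrite !Hs. replace (i <? S N)%nat with true by (symmetry; apply Nat.ltb_lt; lia).
    replace (n - i <? S N)%nat with true by (symmetry; apply Nat.ltb_lt; lia). auto. }
  assert (Hhigh : forall n, (N < n)%nat -> 0 <= nth n (pmul s s) 0).
  { intros n Hn. rewrite nth_pmul. apply cond_pos_sum. intro i. rewrite !Hs.
    destruct (i <? S N)%nat eqn:E1; [|lra]. destruct (n - i <? S N)%nat eqn:E2; [|lra].
    apply Nat.ltb_lt in E1. apply Nat.ltb_lt in E2.
    assert (i <= n \/ n < i)%nat as [Hin|Hin] by lia.
    - pose proof (beta_nonpos i ltac:(lia)). pose proof (beta_nonpos (n - i) ltac:(lia)). nra.
    - replace (n - i)%nat with 0%nat in * by lia. simpl. 
      (* term with i > n : still index (n-i)=0 ; but i <= N < n contradiction *) lia. }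
  assert (Hval : pval (pmul s s) = gam N ^ 2).
  { rewrite pval_pmul. unfold s. rewrite pval_map_seq.
    change (sum_f_R0 (fun k => beta (0 + k)%nat) N) with (sum_f_R0 beta N). unfold gam. ring. }
  destruct (pmul s s) as [|c0 [|c1 r]] eqn:Ec.
  - exfalso. pose proof (Hlow 0%nat ltac:(lia)). rewrite pconv_0 in H. simpl in H. lra.
  - exfalso. pose proof (Hlow 1%nat ltac:(lia)). rewrite pconv_1 in H. simpl in H. lra.
  - assert (E0 : c0 = 1) by (pose proof (Hlow 0%nat ltac:(lia)); rewrite pconv_0 in H; auto).
    assert (E1 : c1 = -1) by (pose proof (Hlow 1%nat ltac:(lia)); rewrite pconv_1 in H; auto).
    assert (Hr : forall k, 0 <= nth k r 0).
    { intro k. change (nth k r 0) with (nth (S (S k)) (c0 :: c1 :: r) 0).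
      destruct (Compare_dec.le_lt_dec (S (S k)) N).
      - rewrite Hlow by auto. rewrite pconv_ge2 by lia. lra.
      - apply Hhigh. auto. }
    exists r. split.
    + rewrite sabs_nonneg by auto. simpl in Hval. lra.
    + subst c0 c1. simpl ev.
      rewrite (T_add B Blin) by (try apply l2_scal; try apply Bl2; try apply ev_l2; auto).
      rewrite T_scal by auto.
      apply functional_extensionality; intro; ring.
Qed.

Lemma QQ_norm N u : (1 <= N)%nat -> l2 u ->
  l2 (fun n => Q N (Q N u) n - (u n - B u n)) /\
  l2norm (fun n => Q N (Q N u) n - (u n - B u n)) <= gam N ^ 2 * l2norm u.
Proof.
  intros HN Hu. destruct (QQ N u HN Hu) as [r [Hr E]]. rewrite E.
  assert (Hl : l2 (B (B (ev r u)))) by (apply Bl2, Bl2, ev_l2; auto).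
  split.
  - apply l2_ext with (B (B (ev r u))); auto. intro; ring.
  - rewrite (l2norm_ext _ (B (B (ev r u)))) by (intro; ring).
    pose proof (Bn (B (ev r u)) ltac:(apply Bl2, ev_l2; auto)).
    pose proof (Bn (ev r u) ltac:(apply ev_l2; auto)).
    pose proof (ev_norm r u Hu). rewrite Hr in H1. lra.
Qed.

Definition Sh (u : nat -> R) : nat -> R := fun n => Series (fun k => beta k * Bpow k u n).

Lemma Sh_ex u n : l2 u -> ex_series (fun k => beta k * Bpow k u n).
Proof.
  intro Hu. apply ex_series_Rle with (fun k => l2norm u * Rabs (beta k)).
  - intro k. rewrite Rabs_mult, Rmult_comm. apply Rmult_le_compat_r. apply Rabs_pos.
    eapply Rle_trans. apply coord_le. apply Bpow_l2; auto. apply Bpow_n; auto.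
  - apply ex_series_Rscal. apply ex_series_abs_beta.
Qed.

Lemma Q_lim u n : l2 u -> is_lim_seq (fun N => Q N u n) (Sh u n).
Proof. intro Hu. apply is_series_iff. apply Series_correct. apply Sh_ex; auto. Qed.

Lemma Q_diff_norm N M u : (N <= M)%nat -> l2 u ->
  l2norm (fun n => Q M u n - Q N u n) <= (gam N - gam M) * l2norm u.
Proof.
  intros HNM Hu. induction HNM.
  - rewrite (l2norm_ext _ (fun _ => 0)) by (intro; ring). rewrite l2norm_zero. lra.
  - rewrite (l2norm_ext _ (fun n => 1 * (Q m u n - Q N u n) + beta (S m) * Bpow (S m) u n)).
    2:{ intro n. unfold Q. rewrite tech5. ring. }
    eapply Rle_trans. apply l2norm_lin. apply l2_sub; apply Q_l2; auto. apply Bpow_l2; auto.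
    rewrite Rabs_R1, Rmult_1_l, abs_beta_S.
    pose proof (Bpow_n (S m) u Hu). pose proof (gam_decr m).
    assert ((gam m - gam (S m)) * l2norm (Bpow (S m) u) <= (gam m - gam (S m)) * l2norm u).
    { apply Rmult_le_compat_l; lra. }
    lra.
Qed.

Lemma Sh_tail N u : l2 u ->
  l2 (fun n => Sh u n - Q N u n) /\ l2norm (fun n => Sh u n - Q N u n) <= gam N * l2norm u.
Proof.
  intro Hu.
  apply (fatou_norm (fun M n => Q (M + N) u n - Q N u n)).
  - pose proof (gam_pos N). pose proof (l2norm_ge0 u). nra.
  - intro n. apply is_lim_seq_plus'. apply (is_lim_seq_incr_n (fun M => Q M u n)). apply Q_lim; auto.
    apply is_lim_seq_const.
  - intro M. split. apply l2_sub; apply Q_l2; auto.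
    eapply Rle_trans. apply Q_diff_norm; auto. lia.
    pose proof (gam_pos (M + N)). pose proof (l2norm_ge0 u). nra.
Qed.

Lemma Q0 u : Q 0 u = u.
Proof. apply functional_extensionality; intro n. unfold Q. simpl. ring. Qed.

Lemma Sh_l2 : l2_op Sh.
Proof.
  intros u Hu. destruct (Sh_tail 0 u Hu) as [H _]. rewrite Q0 in H.
  apply l2_ext with (fun n => (Sh u n - u n) + u n). intro; ring. apply l2_add; auto.
Qed.

Lemma Q_norm N u : l2 u -> l2norm (Q N u) <= 2 * l2norm u.
Proof.
  intro Hu. rewrite (l2norm_ext _ (fun n => 1 * (Q N u n - Q 0 u n) + 1 * Q 0 u n)) by (intro; ring).
  eapply Rle_trans. apply l2norm_lin. apply l2_sub; apply Q_l2; auto. apply Q_l2; auto.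
  rewrite Rabs_R1, !Rmult_1_l. pose proof (Q_diff_norm 0 N u ltac:(lia) Hu).
  rewrite Q0 in *. pose proof (gam_pos N). assert (gam 0 = 1) by (unfold gam; simpl; auto).
  pose proof (l2norm_ge0 u). assert (0 <= gam N * l2norm u) by (apply Rmult_le_pos; lra). nra.
Qed.

Lemma Sh_norm u : l2 u -> l2norm (Sh u) <= 2 * l2norm u.
Proof.
  intro Hu. destruct (Sh_tail 0 u Hu) as [H1 H2]. rewrite Q0 in H1, H2.
  rewrite (l2norm_ext _ (fun n => 1 * (Sh u n - u n) + 1 * u n)) by (intro; ring).
  eapply Rle_trans. apply l2norm_lin; auto.
  rewrite Rabs_R1, !Rmult_1_l. assert (gam 0 = 1) by (unfold gam; simpl; auto).
  rewrite H in H2. lra.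
Qed.

Lemma Sh_lin : lin_op Sh.
Proof.
  intros u v a b Hu Hv. apply functional_extensionality; intro n. unfold Sh.
  rewrite (Series_ext _ (fun k => a * (beta k * Bpow k u n) + b * (beta k * Bpow k v n))).
  rewrite Series_plus, !Series_scal_l. auto.
  apply ex_series_Rscal, Sh_ex; auto. apply ex_series_Rscal, Sh_ex; auto.
  intro k. rewrite Bpow_lin by auto. ring.
Qed.

Lemma Q_sym N : sym_op (Q N).
Proof.
  intros u v Hu Hv. unfold Q. rewrite ip_sum; auto. rewrite ip_sym, ip_sum; auto.
  apply sum_eq. intros. rewrite Bpow_sym by auto. rewrite ip_sym. auto.
  intro; apply Bpow_l2; auto. intro; apply Bpow_l2; auto.
Qed.

Lemma Sh_sym : sym_op Sh.
Proof.
  intros u v Hu Hv.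
  apply Rminus_diag_uniq.
  apply (small_abs _ (fun N => 2 * l2norm u * l2norm v * gam N)).
  { apply is_lim_seq_ext with (fun N => (2 * l2norm u * l2norm v) * gam N). intro; ring. apply lim_scal_gam. }
  intro N. destruct (Sh_tail N u Hu) as [Hu1 Hu2]. destruct (Sh_tail N v Hv) as [Hv1 Hv2].
  assert (E : l2inner (Sh u) v - l2inner u (Sh v)
     = l2inner (fun n => Sh u n - Q N u n) v - l2inner u (fun n => Sh v n - Q N v n)).
  { replace (fun n => Sh u n - Q N u n) with (fun n => 1 * Sh u n + (-1) * Q N u n)
      by (apply functional_extensionality; intro; ring).
    replace (fun n => Sh v n - Q N v n) with (fun n => 1 * Sh v n + (-1) * Q N v n)
      by (apply functional_extensionality; intro; ring).
    rewrite ip_lin_l, ip_lin_r; try apply Sh_l2; try apply Q_l2; auto.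
    rewrite Q_sym by auto. ring. }
  rewrite E.
  pose proof (ip_abs _ _ Hu1 Hv). pose proof (ip_abs _ _ Hu (proj1 (Sh_tail N v Hv))).
  pose proof (l2norm_ge0 u). pose proof (l2norm_ge0 v).
  pose proof (l2norm_ge0 (fun n => Sh u n - Q N u n)). pose proof (l2norm_ge0 (fun n => Sh v n - Q N v n)).
  eapply Rle_trans. apply Rabs_triang. rewrite Rabs_Ropp.
  assert (l2norm (fun n => Sh u n - Q N u n) * l2norm v <= gam N * l2norm u * l2norm v) by
    (apply Rmult_le_compat_r; auto).
  assert (l2norm u * l2norm (fun n => Sh v n - Q N v n) <= l2norm u * (gam N * l2norm v)) by
    (apply Rmult_le_compat_l; auto).
  lra.
Qed.

Lemma Q_pos N u : l2 u -> gam N * nsq u <= l2inner (Q N u) u.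
Proof.
  intro Hu. unfold Q. rewrite ip_sum; auto. 2: intro; apply Bpow_l2; auto.
  induction N.
  - change (gam 0 * nsq u <= beta 0 * l2inner (Bpow 0 u) u).
    replace (gam 0) with 1 by (unfold gam; simpl; auto). rewrite nsq_ip. simpl. lra.
  - rewrite tech5. unfold gam in *. rewrite tech5.
    pose proof (Bpow_ip_le (S N) u Hu). pose proof (beta_nonpos (S N) ltac:(lia)).
    assert (beta (S N) * nsq u <= beta (S N) * l2inner (Bpow (S N) u) u)
      by (apply Rmult_le_compat_neg_l; auto).
    change (l2inner (fun n : nat => Bpow (S N) u n) u) with (l2inner (Bpow (S N) u) u). lra.
Qed.

Lemma Sh_pos : pos_op Sh.
Proof.
  intros u Hu. set (N := 0%nat). destruct (Sh_tail N u Hu) as [H1 H2].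
  assert (E : l2inner (Sh u) u = l2inner (fun n => Sh u n - Q N u n) u + l2inner (Q N u) u).
  { replace (fun n => Sh u n - Q N u n) with (fun n => 1 * Sh u n + (-1) * Q N u n)
      by (apply functional_extensionality; intro; ring).
    rewrite ip_lin_l; try apply Sh_l2; try apply Q_l2; auto. ring. }
  pose proof (Q_pos N u Hu). pose proof (ip_abs _ _ H1 Hu).
  pose proof (l2norm_ge0 u). pose proof (l2norm_sq u Hu).
  assert (l2norm (fun n => Sh u n - Q N u n) * l2norm u <= gam N * l2norm u * l2norm u)
    by (apply Rmult_le_compat_r; auto).
  rewrite E. pose proof (Rle_abs (- l2inner (fun n : nat => Sh u n - Q N u n) u)) as H8.
  rewrite Rabs_Ropp in H8. rewrite <- H4 in H. 
  assert (gam N * l2norm u * l2norm u = gam N * l2norm u ^ 2) by ring. nra.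
Qed.

Lemma gam_le1 N : gam N <= 1.
Proof. pose proof (gam_decr_le 0 N ltac:(lia)). unfold gam at 2 in H. simpl in H. auto. Qed.

Lemma Sh_sq u : l2 u -> Sh (Sh u) = (fun n => u n - B u n).
Proof.
  intro Hu. apply functional_extensionality; intro n.
  apply Rminus_diag_uniq.
  set (w := fun n => Sh (Sh u) n - (u n - B u n)).
  change (w n = 0). revert n.
  assert (Hsu := Sh_l2 u Hu).
  apply (small_norm w (fun N => (5 * l2norm u) * gam (S N))).
  { unfold w. apply l2_sub. apply Sh_l2; auto. apply l2_sub; auto. }
  { apply lim_scal_gamS. }
  intro N. set (M := S N).
  destruct (Sh_tail M u Hu) as [T1 T2].
  assert (HQ : l2 (Q M u)) by (apply Q_l2; auto).
  destruct (Sh_tail M (Q M u) HQ) as [T3 T4].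
  destruct (QQ_norm M u ltac:(unfold M; lia) Hu) as [T5 T6].
  assert (E : forall n, w n = 1 * Sh (fun n => Sh u n - Q M u n) n
                + 1 * (1 * (Sh (Q M u) n - Q M (Q M u) n) + 1 * (Q M (Q M u) n - (u n - B u n)))).
  { intro n. rewrite (T_sub Sh Sh_lin) by auto. unfold w. ring. }
  rewrite (l2norm_ext _ _ E).
  assert (L1 : l2 (Sh (fun n => Sh u n - Q M u n))) by (apply Sh_l2; auto).
  eapply Rle_trans. apply l2norm_lin; auto. apply l2_lin; auto.
  rewrite Rabs_R1, !Rmult_1_l.
  pose proof (l2norm_lin 1 1 _ _ T3 T5). rewrite Rabs_R1, !Rmult_1_l in H.
  pose proof (Sh_norm _ T1). pose proof (Q_norm M u Hu).
  pose proof (gam_pos M). pose proof (gam_le1 M). pose proof (l2norm_ge0 u).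
  assert (gam M * l2norm (Q M u) <= gam M * (2 * l2norm u)) by (apply Rmult_le_compat_l; lra).
  assert (gam M ^ 2 * l2norm u <= gam M * l2norm u).
  { apply Rmult_le_compat_r; auto. nra. }
  fold M. nra.
Qed.

Lemma Sh_comm (T : op) K : l2_op T -> lin_op T -> bnd T K -> 0 <= K ->
  (forall w, l2 w -> T (B w) = B (T w)) -> forall u, l2 u -> T (Sh u) = Sh (T u).
Proof.
  intros Tl2 Tlin Tb HK Tc u Hu.
  assert (Hp : forall k w, l2 w -> T (Bpow k w) = Bpow k (T w)).
  { induction k; intros w Hw; simpl; auto. rewrite Tc by (apply Bpow_l2; auto). rewrite IHk; auto. }
  assert (HQ : forall N, T (Q N u) = Q N (T u)).
  { intro N. unfold Q. rewrite (T_sum T Tlin (fun k => Bpow k u)).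
    apply functional_extensionality; intro n. apply sum_eq. intros. rewrite Hp; auto.
    intro; apply Bpow_l2; auto. }
  apply functional_extensionality; intro n. apply Rminus_diag_uniq.
  set (w := fun n => T (Sh u) n - Sh (T u) n). change (w n = 0). revert n.
  assert (HTu := Tl2 u Hu).
  apply (small_norm w (fun N => (K * l2norm u + l2norm (T u)) * gam N)).
  { unfold w. apply l2_sub. apply Tl2, Sh_l2; auto. apply Sh_l2; auto. }
  { apply lim_scal_gam. }
  intro N.
  destruct (Sh_tail N u Hu) as [T1 T2]. destruct (Sh_tail N (T u) HTu) as [T3 T4].
  assert (E : forall n, w n = 1 * T (fun n => Sh u n - Q N u n) n + (-1) * (Sh (T u) n - Q N (T u) n)).
  { intro n. rewrite (T_sub T Tlin) by (try apply Sh_l2; try apply Q_l2; auto). rewrite HQ. unfold w. ring. }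
  rewrite (l2norm_ext _ _ E).
  eapply Rle_trans. apply l2norm_lin; auto.
  rewrite Rabs_R1, Rabs_m1, !Rmult_1_l.
  pose proof (Tb _ T1). pose proof (gam_pos N).
  assert (K * l2norm (fun n => Sh u n - Q N u n) <= K * (gam N * l2norm u)) by (apply Rmult_le_compat_l; auto).
  nra.
Qed.

End SQ.

Lemma ip_zero_r u : l2inner u (fun _ => 0) = 0.
Proof. unfold l2inner. rewrite (Series_ext _ (fun _ => 0)) by (intro; ring). apply Series_zero. Qed.

Lemma pos_zero (P : op) y : l2_op P -> lin_op P -> sym_op P -> pos_op P -> l2 y ->
  l2inner (P y) y = 0 -> P y = (fun _ => 0).
Proof.
  intros Pl2 Plin Psym Ppos Hy H0. apply functional_extensionality.
  apply nsq_zero_pt. apply Pl2; auto.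
  pose proof (pos_CS P y (P y) Pl2 Plin Psym Ppos Hy (Pl2 _ Hy)) as H.
  rewrite H0, Rmult_0_l in H. rewrite nsq_ip. nra.
Qed.

Theorem sqrt_thm (M : op) K0 : 0 <= K0 -> l2_op M -> lin_op M -> bnd M K0 -> sym_op M -> pos_op M ->
  exists S : op, pos_bounded_op S /\ (forall u, l2 u -> S (S u) = M u) /\
   (forall T : op, pos_bounded_op T -> (forall u, l2 u -> T (T u) = M u) ->
       forall u, l2 u -> T u = S u).
Proof.
  intros HK0 Ml2 Mlin Mb Msym Mpos.
  set (K := K0 + 1). assert (HK : 0 < K) by (unfold K; lra).
  set (B := fun (u : nat -> R) n => 1 * u n + (- / K) * M u n).
  assert (Bl2 : l2_op B) by (intros u Hu; apply l2_lin; auto).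
  assert (Blin : lin_op B).
  { intros u v a b Hu Hv. unfold B. rewrite Mlin by auto. apply functional_extensionality; intro; ring. }
  assert (Bsym : sym_op B).
  { intros u v Hu Hv. unfold B. rewrite ip_lin_l, ip_lin_r; auto. rewrite Msym by auto. ring. }
  assert (MK : forall u, l2 u -> l2inner (M u) u <= K0 * nsq u).
  { intros u Hu. eapply Rle_trans. apply Rle_abs. eapply Rle_trans. apply ip_abs; auto.
    rewrite <- l2norm_sq by auto. pose proof (Mb u Hu). pose proof (l2norm_ge0 u).
    pose proof (l2norm_ge0 (M u)). nra. }
  assert (Bip : forall u, l2 u -> l2inner (B u) u = nsq u - / K * l2inner (M u) u).
  { intros u Hu. unfold B. rewrite ip_lin_l; auto. rewrite nsq_ip. ring. }
  assert (Bpos : pos_op B).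
  { intros u Hu. rewrite Bip by auto. pose proof (MK u Hu). pose proof (nsq_ge0 u Hu).
    pose proof (Mpos u Hu).
    assert (/ K * l2inner (M u) u <= / K * (K0 * nsq u)) by (apply Rmult_le_compat_l; auto; left; apply Rinv_0_lt_compat; auto).
    assert (/ K * (K0 * nsq u) <= nsq u).
    { unfold K. apply Rmult_le_reg_l with (K0 + 1). lra.
      rewrite <- Rmult_assoc, Rinv_r by lra. nra. }
    lra. }
  assert (Ble : forall u, l2 u -> l2inner (B u) u <= nsq u).
  { intros u Hu. rewrite Bip by auto. pose proof (Mpos u Hu).
    assert (0 <= / K * l2inner (M u) u) by (apply Rmult_le_pos; auto; left; apply Rinv_0_lt_compat; auto).
    lra. }
  assert (Bn : bnd B 1).
  { intros u Hu. rewrite Rmult_1_l. unfold l2norm. apply sqrt_le_1_alt.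
    fold (nsq (B u)). fold (nsq u).
    pose proof (pos_CS B u (B u) Bl2 Blin Bsym Bpos Hu (Bl2 _ Hu)) as H.
    rewrite <- nsq_ip in H.
    pose proof (Ble (B u) (Bl2 _ Hu)). pose proof (Ble u Hu). pose proof (Bpos u Hu).
    pose proof (Bpos (B u) (Bl2 _ Hu)). pose proof (nsq_ge0 _ (Bl2 _ Hu)). pose proof (nsq_ge0 u Hu).
    assert (nsq (B u) ^ 2 <= nsq u * nsq (B u)).
    { eapply Rle_trans. apply H. apply Rmult_le_compat; auto. }
    nra. }
  set (S := fun (u : nat -> R) n => sqrt K * Sh B u n).
  assert (Shl2 : l2_op (Sh B)) by (apply Sh_l2; auto).
  assert (Shlin : lin_op (Sh B)) by (apply Sh_lin; auto).
  assert (Sl2 : l2_op S) by (intros u Hu; apply l2_scal; auto).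
  assert (Slin : lin_op S).
  { intros u v a b Hu Hv. unfold S. rewrite Shlin by auto. apply functional_extensionality; intro; ring. }
  assert (Ssym : sym_op S).
  { intros u v Hu Hv. unfold S.
    replace (fun n => sqrt K * Sh B u n) with (fun n => sqrt K * Sh B u n + 0 * Sh B u n)
      by (apply functional_extensionality; intro; ring).
    replace (fun n => sqrt K * Sh B v n) with (fun n => sqrt K * Sh B v n + 0 * Sh B v n)
      by (apply functional_extensionality; intro; ring).
    rewrite ip_lin_l, ip_lin_r; auto. rewrite (Sh_sym B) by auto. ring. }
  assert (Spos : pos_op S).
  { intros u Hu. unfold S.
    replace (fun n => sqrt K * Sh B u n) with (fun n => sqrt K * Sh B u n + 0 * Sh B u n)
      by (apply functional_extensionality; intro; ring).
    rewrite ip_lin_l; auto. pose proof (Sh_pos B Bl2 Bn u Hu). pose proof (sqrt_pos K). nra. }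
  assert (Sb : bnd S (2 * sqrt K)).
  { intros u Hu. unfold S. rewrite (l2norm_ext _ (fun n => sqrt K * Sh B u n + 0 * Sh B u n)) by (intro; ring).
    eapply Rle_trans. apply l2norm_lin; auto. rewrite Rabs_R0, Rmult_0_l, Rplus_0_r.
    rewrite Rabs_pos_eq by apply sqrt_pos. pose proof (Sh_norm B Bl2 Bn u Hu).
    pose proof (sqrt_pos K). nra. }
  assert (SS : forall u, l2 u -> S (S u) = M u).
  { intros u Hu. unfold S. rewrite (T_scal (Sh B) Shlin) by auto.
    rewrite (Sh_sq B) by auto. apply functional_extensionality; intro n.
    unfold B. rewrite <- Rmult_assoc. rewrite sqrt_sqrt by lra. field. lra. }
  exists S. split; [|split].
  - split; [auto|split; [auto|split; [|split; auto]]]. exists (2 * sqrt K). split; auto.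
    pose proof (sqrt_pos K). lra.
  - auto.
  - intros T [Tl2 [Tlin [[KT [HKT Tb]] [Tsym Tpos]]]] TT x Hx.
    assert (TM : forall u, l2 u -> T (M u) = M (T u)).
    { intros u Hu. rewrite <- TT by auto. rewrite TT by auto. auto. }
    assert (TB : forall w, l2 w -> T (B w) = B (T w)).
    { intros w Hw. unfold B. rewrite Tlin by auto. rewrite TM by auto. auto. }
    assert (TS : forall u, l2 u -> T (S u) = S (T u)).
    { intros u Hu. unfold S. rewrite (T_scal T Tlin) by auto.
      rewrite (Sh_comm B Bl2 Bn T KT) by auto. auto. }
    set (y := fun n => S x n - T x n).
    assert (Hy : l2 y) by (apply l2_sub; auto).
    assert (E0 : (fun n => S y n + T y n) = (fun _ => 0)).
    { unfold y. rewrite (T_sub S Slin), (T_sub T Tlin) by auto. rewrite SS, TT, TS by auto.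
      apply functional_extensionality; intro; ring. }
    assert (E1 : l2inner (S y) y + l2inner (T y) y = 0).
    { replace (fun n => S y n + T y n) with (fun n => 1 * S y n + 1 * T y n) in E0
        by (apply functional_extensionality; intro; ring).
      transitivity (l2inner (fun n => 1 * S y n + 1 * T y n) y).
      rewrite ip_lin_l; auto. ring. rewrite E0, ip_sym, ip_zero_r. reflexivity. }
    pose proof (Spos y Hy). pose proof (Tpos y Hy).
    assert (Sy : S y = (fun _ => 0)) by (apply pos_zero; auto; lra).
    assert (Ty : T y = (fun _ => 0)) by (apply pos_zero; auto; lra).
    assert (Ny : nsq y = 0).
    { rewrite nsq_ip. unfold y at 1.
      replace (fun n => S x n - T x n) with (fun n => 1 * S x n + (-1) * T x n)
        by (apply functional_extensionality; intro; ring).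
      rewrite ip_lin_l; auto. rewrite Ssym, Tsym by auto. rewrite Sy, Ty, ip_zero_r. ring. }
    apply functional_extensionality; intro n. pose proof (nsq_zero_pt y Hy Ny n). unfold y in H1. lra.
Qed.

Lemma Series_finite (x : nat -> R) N : (forall m, (N < m)%nat -> x m = 0) -> Series x = sum_f_R0 x N.
Proof.
  intro H. apply is_series_unique. apply is_series_iff.
  apply (is_lim_seq_incr_n _ N).
  apply is_lim_seq_ext with (fun _ => sum_f_R0 x N). 2: apply is_lim_seq_const.
  intro k. induction k. simpl. auto. simpl. rewrite H by lia. rewrite <- IHk. ring.
Qed.

Definition tr (N : nat) (u : nat -> R) : nat -> R := fun m => if (m <=? N)%nat then u m else 0.

Lemma tr_l2 N u : l2 u -> l2 (tr N u).
Proof.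
  intro Hu. unfold l2. apply ex_series_Rle with (fun m => u m ^ 2); auto.
  intro m. pose proof (pow2_ge_0 (u m)). unfold tr. destruct (m <=? N)%nat; rewrite Rabs_pos_eq; try nra.
Qed.

Lemma Series_tr (f : nat -> R) N (u : nat -> R) :
  Series (fun m => f m * tr N u m) = sum_f_R0 (fun m => f m * u m) N.
Proof.
  rewrite Series_finite with (N := N).
  apply sum_eq. intros i Hi. unfold tr. replace (i <=? N)%nat with true by (symmetry; apply Nat.leb_le; auto). auto.
  intros m Hm. unfold tr. replace (m <=? N)%nat with false by (symmetry; apply Nat.leb_gt; auto). ring.
Qed.

Lemma nsq_tail N u : l2 u -> nsq (fun m => u m - tr N u m) = nsq u - sum_f_R0 (fun m => u m ^ 2) N.
Proof.
  intro Hu. unfold nsq.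
  rewrite (Series_ext _ (fun m => u m ^ 2 - (u m ^ 2) * tr N (fun _ => 1) m)).
  rewrite Series_minus; auto. rewrite Series_tr. f_equal. apply sum_eq; intros; ring.
  apply ex_series_Rle with (fun m => u m ^ 2); auto. intro m. pose proof (pow2_ge_0 (u m)). unfold tr. destruct (m <=? N)%nat; rewrite Rabs_pos_eq; try nra.
  intro m. unfold tr. destruct (m <=? N)%nat; ring.
Qed.

Lemma tail_lim u : l2 u -> is_lim_seq (fun N => l2norm (fun m => u m - tr N u m)) 0.
Proof.
  intro Hu. rewrite <- sqrt_0. unfold l2norm.
  apply is_lim_seq_continuous. apply continuity_pt_sqrt; lra.
  apply is_lim_seq_ext with (fun N => nsq u - sum_f_R0 (fun m => u m ^ 2) N).
  intro N. symmetry. apply (nsq_tail N u Hu).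
  replace 0 with (nsq u + -1 * nsq u) by ring.
  apply is_lim_seq_ext with (fun N => nsq u + -1 * sum_f_R0 (fun m => u m ^ 2) N). intro; ring.
  apply is_lim_seq_plus'. apply is_lim_seq_const. apply is_lim_seq_mult'. apply is_lim_seq_const.
  apply is_series_iff. apply Series_correct. auto.
Qed.

Lemma tr_norm N u : l2 u -> l2norm (tr N u) <= l2norm u.
Proof.
  intro Hu. unfold l2norm. apply sqrt_le_1_alt. apply Series_le; auto.
  intro m. pose proof (pow2_ge_0 (u m)). unfold tr. destruct (m <=? N)%nat; split; try nra.
Qed.

Lemma dsum_swap (f : nat -> nat -> R) N M :
  sum_f_R0 (fun n => sum_f_R0 (fun m => f n m) M) N = sum_f_R0 (fun m => sum_f_R0 (fun n => f n m) N) M.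
Proof.
  induction N; simpl. auto. rewrite IHN. rewrite <- plus_sum. auto.
Qed.

Definition ebas (n : nat) : nat -> R := fun m => if (m =? n)%nat then 1 else 0.

Lemma sum_ebas (f : nat -> R) n : sum_f_R0 (fun m => f m * ebas n m) n = f n.
Proof.
  destruct n. unfold ebas; simpl; ring.
  rewrite tech5. rewrite (sum_eq _ (fun _ => 0)). rewrite sum_zero. unfold ebas. rewrite Nat.eqb_refl. ring.
  intros i Hi. unfold ebas. replace (i =? S n)%nat with false by (symmetry; apply Nat.eqb_neq; lia). ring.
Qed.

Section AOP.
Variable a : nat -> nat -> R.
Variables K2 k1 : R.
Hypothesis HK2 : 0 < K2.
Hypothesis Hk1 : 0 < k1.
Hypothesis asym : forall n m, a n m = a m n.
Hypothesis aup : forall (u : nat -> R) N P,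
  sum_f_R0 (fun n => (sum_f_R0 (fun m => a n m * u m) N) ^ 2) P <= K2 * sum_f_R0 (fun m => u m ^ 2) N.
Hypothesis alow : forall (u : nat -> R) N,
  k1 * sum_f_R0 (fun m => u m ^ 2) N <= sum_f_R0 (fun n => u n * sum_f_R0 (fun m => a n m * u m) N) N.

Lemma row_l2 n : l2 (a n).
Proof.
  unfold l2. apply (bounded_psum_series _ K2). intro; apply pow2_ge_0.
  intro P. pose proof (aup (ebas n) n P).
  rewrite (sum_eq (fun m => ebas n m ^ 2) (fun m => 1 * ebas n m)) in H.
  rewrite sum_ebas, Rmult_1_r in H. eapply Rle_trans; [|apply H].
  right. apply sum_eq. intros k _. rewrite sum_ebas. rewrite asym. auto.
  intros. unfold ebas. destruct (i =? n)%nat; ring.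
Qed.

Definition Aop (u : nat -> R) : nat -> R := fun n => Series (fun m => a n m * u m).

Lemma Aop_ex u n : l2 u -> ex_series (fun m => a n m * u m).
Proof. intro. apply l2_prod; auto. apply row_l2. Qed.

Lemma Aop_main u : l2 u -> l2 (Aop u) /\ nsq (Aop u) <= K2 * nsq u.
Proof.
  intro Hu. apply (fatou (fun N n => sum_f_R0 (fun m => a n m * u m) N)).
  - intro n. apply is_series_iff. apply Series_correct. apply Aop_ex; auto.
  - intros N P. eapply Rle_trans. apply aup. apply Rmult_le_compat_l. lra. apply psum_le_nsq; auto.
Qed.

Lemma Aop_l2 : l2_op Aop.
Proof. intros u Hu. apply Aop_main; auto. Qed.

Lemma Aop_bnd : bnd Aop (sqrt K2).
Proof.
  intros u Hu. destruct (Aop_main u Hu) as [H1 H2]. unfold l2norm.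
  rewrite <- sqrt_mult by (lra || apply nsq_ge0; auto). apply sqrt_le_1_alt. auto.
Qed.

Lemma Aop_lin : lin_op Aop.
Proof.
  intros u v x y Hu Hv. apply functional_extensionality; intro n. unfold Aop.
  rewrite (Series_ext _ (fun m => x * (a n m * u m) + y * (a n m * v m))) by (intro; ring).
  rewrite Series_plus, !Series_scal_l; auto.
  apply ex_series_Rscal, Aop_ex; auto. apply ex_series_Rscal, Aop_ex; auto.
Qed.

Lemma Aop_tr N u : Aop (tr N u) = (fun n => sum_f_R0 (fun m => a n m * u m) N).
Proof. apply functional_extensionality; intro n. unfold Aop. apply Series_tr. Qed.

Lemma ip_tr N w u : l2inner w (tr N u) = sum_f_R0 (fun n => u n * w n) N.
Proof. unfold l2inner. rewrite Series_tr. apply sum_eq; intros; ring. Qed.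

Lemma Aop_approx u v N : l2 u -> l2 v ->
  Rabs (l2inner (Aop u) v - l2inner (Aop (tr N u)) (tr N v))
   <= sqrt K2 * (l2norm (fun m => u m - tr N u m) * l2norm v + l2norm u * l2norm (fun m => v m - tr N v m)).
Proof.
  intros Hu Hv.
  assert (Htu := tr_l2 N u Hu). assert (Htv := tr_l2 N v Hv).
  assert (Hdu : l2 (fun m => u m - tr N u m)) by (apply l2_sub; auto).
  assert (Hdv : l2 (fun m => v m - tr N v m)) by (apply l2_sub; auto).
  assert (E : l2inner (Aop u) v - l2inner (Aop (tr N u)) (tr N v)
     = l2inner (Aop (fun m => u m - tr N u m)) v + l2inner (Aop (tr N u)) (fun m => v m - tr N v m)).
  { rewrite (T_sub Aop Aop_lin) by auto.
    replace (fun n => Aop u n - Aop (tr N u) n) with (fun n => 1 * Aop u n + (-1) * Aop (tr N u) n)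
      by (apply functional_extensionality; intro; ring).
    replace (fun m => v m - tr N v m) with (fun m => 1 * v m + (-1) * tr N v m)
      by (apply functional_extensionality; intro; ring).
    rewrite ip_lin_l, ip_lin_r; try apply Aop_l2; auto. ring. }
  rewrite E. eapply Rle_trans. apply Rabs_triang.
  pose proof (ip_abs _ _ (Aop_l2 _ Hdu) Hv). pose proof (ip_abs _ _ (Aop_l2 _ Htu) Hdv).
  pose proof (Aop_bnd _ Hdu). pose proof (Aop_bnd _ Htu). pose proof (tr_norm N u Hu).
  pose proof (l2norm_ge0 v). pose proof (l2norm_ge0 (fun m => v m - tr N v m)).
  pose proof (l2norm_ge0 (tr N u)). pose proof (sqrt_pos K2).
  assert (l2norm (Aop (fun m => u m - tr N u m)) * l2norm v <= sqrt K2 * l2norm (fun m => u m - tr N u m) * l2norm v)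
    by (apply Rmult_le_compat_r; auto).
  assert (l2norm (Aop (tr N u)) * l2norm (fun m => v m - tr N v m) <= sqrt K2 * l2norm u * l2norm (fun m => v m - tr N v m)).
  { apply Rmult_le_compat_r; auto. eapply Rle_trans. apply H2. apply Rmult_le_compat_l; auto. }
  nra.
Qed.

Lemma err_lim u v : l2 u -> l2 v ->
  is_lim_seq (fun N => sqrt K2 * (l2norm (fun m => u m - tr N u m) * l2norm v + l2norm u * l2norm (fun m => v m - tr N v m))) 0.
Proof.
  intros Hu Hv. replace 0 with (sqrt K2 * (0 * l2norm v + l2norm u * 0)) by ring.
  apply is_lim_seq_mult'. apply is_lim_seq_const. apply is_lim_seq_plus'.
  apply is_lim_seq_mult'. apply tail_lim; auto. apply is_lim_seq_const.
  apply is_lim_seq_mult'. apply is_lim_seq_const. apply tail_lim; auto.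
Qed.

Lemma Aop_sym : sym_op Aop.
Proof.
  intros u v Hu Hv. apply Rminus_diag_uniq.
  pose proof (is_lim_seq_plus' _ _ 0 0 (err_lim u v Hu Hv) (err_lim v u Hv Hu)) as HL.
  rewrite Rplus_0_r in HL.
  apply (small_abs _ _ HL).
  intro N.
  pose proof (Aop_approx u v N Hu Hv). pose proof (Aop_approx v u N Hv Hu).
  assert (E : l2inner (Aop (tr N u)) (tr N v) = l2inner (Aop (tr N v)) (tr N u)).
  { rewrite !ip_tr, !Aop_tr.
    rewrite (sum_eq _ (fun n => sum_f_R0 (fun m => v n * a n m * u m) N)).
    rewrite (sum_eq (fun n => u n * sum_f_R0 (fun m => a n m * v m) N) (fun n => sum_f_R0 (fun m => u n * a n m * v m) N)).
    rewrite dsum_swap. apply sum_eq. intros. apply sum_eq. intros. rewrite asym. ring.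
    intros. rewrite scal_sum. apply sum_eq; intros; ring.
    intros. rewrite scal_sum. apply sum_eq; intros; ring. }
  rewrite (ip_sym u (Aop v)).
  replace (l2inner (Aop u) v - l2inner (Aop v) u)
    with ((l2inner (Aop u) v - l2inner (Aop (tr N u)) (tr N v)) - (l2inner (Aop v) u - l2inner (Aop (tr N v)) (tr N u)))
    by (rewrite E; ring).
  eapply Rle_trans. apply Rabs_triang. rewrite Rabs_Ropp. lra.
Qed.

Lemma Aop_coer u : l2 u -> k1 * nsq u <= l2inner (Aop u) u.
Proof.
  intro Hu.
  apply (small_le _ _ (fun N => k1 * nsq (fun m => u m - tr N u m) +
     sqrt K2 * (l2norm (fun m => u m - tr N u m) * l2norm u + l2norm u * l2norm (fun m => u m - tr N u m)))).
  - replace 0 with (k1 * 0 + 0) by ring. apply is_lim_seq_plus'. apply is_lim_seq_mult'. apply is_lim_seq_const.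
    apply is_lim_seq_ext with (fun N => l2norm (fun m => u m - tr N u m) ^ 2).
    intro N. apply l2norm_sq. apply l2_sub; auto. apply tr_l2; auto.
    replace 0 with (0 ^ 2) by ring. apply is_lim_seq_ext with (fun N => l2norm (fun m => u m - tr N u m) * (l2norm (fun m => u m - tr N u m) * 1)).
    intro; ring. replace (0 ^ 2) with (0 * (0 * 1)) by ring. apply is_lim_seq_mult'. apply tail_lim; auto.
    apply is_lim_seq_mult'. apply tail_lim; auto. apply is_lim_seq_const.
    apply err_lim; auto.
  - intro N. pose proof (Aop_approx u u N Hu Hu). pose proof (alow u N).
    rewrite nsq_tail by auto.
    assert (E : l2inner (Aop (tr N u)) (tr N u) = sum_f_R0 (fun n => u n * sum_f_R0 (fun m => a n m * u m) N) N).
    { rewrite ip_tr, Aop_tr. auto. }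
    rewrite E in H.
    apply Rabs_le_between in H. lra.
Qed.
End AOP.

Lemma ex_series_Rext (x y : nat -> R) : (forall n, x n = y n) -> ex_series x -> ex_series y.
Proof. intros E H. apply ex_series_ext with x; auto. Qed.

Definition Mo (a : nat -> nat -> R) (c : nat -> R) (u : nat -> R) : nat -> R :=
  fun n => Series (fun m => c n * c m * a n m * u m).

Lemma c_le0 (c : nat -> R) : (forall n, c (S n) < c n) -> forall n, c n <= c 0%nat.
Proof. intros Hd n. induction n. lra. pose proof (Hd n). lra. Qed.

Section Final.
Variable a : nat -> nat -> R.
Variable c : nat -> R.
Variables K2 k1 : R.
Hypothesis HK2 : 0 < K2.
Hypothesis Hk1 : 0 < k1.
Hypothesis asym : forall n m, a n m = a m n.
Hypothesis aup : forall (u : nat -> R) N P,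
  sum_f_R0 (fun n => (sum_f_R0 (fun m => a n m * u m) N) ^ 2) P <= K2 * sum_f_R0 (fun m => u m ^ 2) N.
Hypothesis alow : forall (u : nat -> R) N,
  k1 * sum_f_R0 (fun m => u m ^ 2) N <= sum_f_R0 (fun n => u n * sum_f_R0 (fun m => a n m * u m) N) N.
Hypothesis cpos : forall n, 0 < c n.
Hypothesis cdec : forall n, c (S n) < c n.

Let c0 := c 0%nat.
Let A := Aop a.
Let D := cmul c.

Lemma Al2 : l2_op A.
Proof. exact (Aop_l2 a K2 HK2 asym aup). Qed.
Lemma Alin : lin_op A.
Proof. exact (Aop_lin a K2 asym aup). Qed.
Lemma Abnd : bnd A (sqrt K2).
Proof. exact (Aop_bnd a K2 HK2 asym aup). Qed.
Lemma Asym : sym_op A.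
Proof. exact (Aop_sym a K2 HK2 asym aup). Qed.

Lemma D_l2 : l2_op D.
Proof.
  intros u Hu. unfold l2, D, cmul. apply ex_series_Rle with (fun n => c0 ^ 2 * u n ^ 2).
  - intro n. pose proof (c_le0 c cdec n). pose proof (cpos n). rewrite Rabs_pos_eq by apply pow2_ge_0.
    pose proof (pow2_ge_0 (u n)). unfold c0. 
    assert (c n ^ 2 <= c 0%nat ^ 2) by nra. replace ((c n * u n) ^ 2) with (c n ^ 2 * u n ^ 2) by ring. nra.
  - apply ex_series_Rscal; auto.
Qed.

Lemma D_bnd : bnd D c0.
Proof.
  intros u Hu. unfold l2norm. rewrite <- (sqrt_pow2 c0) by (unfold c0; pose proof (cpos 0); lra).
  rewrite <- sqrt_mult by (try apply pow2_ge_0; apply nsq_ge0; auto).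
  apply sqrt_le_1_alt. fold (nsq u). unfold nsq. rewrite <- Series_scal_l. apply Series_le.
  - intro n. unfold D, cmul. pose proof (c_le0 c cdec n). pose proof (cpos n).
    pose proof (pow2_ge_0 (u n)). split. apply pow2_ge_0. unfold c0.
    assert (c n ^ 2 <= c 0%nat ^ 2) by nra. replace ((c n * u n) ^ 2) with (c n ^ 2 * u n ^ 2) by ring. nra.
  - apply ex_series_Rscal; auto.
Qed.

Lemma D_lin : lin_op D.
Proof. intros u v x y _ _. apply functional_extensionality; intro; unfold D, cmul; ring. Qed.

Lemma D_sym : sym_op D.
Proof. intros u v _ _. unfold l2inner, D, cmul. apply Series_ext; intro; ring. Qed.

Lemma Mo_eq u : Mo a c u = (fun n => c n * A (D u) n).
Proof.
  apply functional_extensionality; intro n. unfold Mo, A, Aop, D, cmul.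
  rewrite <- Series_scal_l. apply Series_ext; intro; ring.
Qed.

Lemma Mo_l2 : l2_op (Mo a c).
Proof.
  intros u Hu. rewrite Mo_eq. apply (D_l2 (A (D u))). apply Al2; auto. apply D_l2; auto.
Qed.

Lemma Mo_lin : lin_op (Mo a c).
Proof.
  intros u v x y Hu Hv. rewrite !Mo_eq. rewrite D_lin by auto.
  rewrite Alin by (apply D_l2; auto).
  apply functional_extensionality; intro; ring.
Qed.

Lemma Mo_bndD u : l2 u -> l2norm (Mo a c u) <= c0 * sqrt K2 * l2norm (D u).
Proof.
  intro Hu. rewrite Mo_eq. change (fun n => c n * A (D u) n) with (D (A (D u))).
  assert (HDu := D_l2 u Hu).
  eapply Rle_trans. apply D_bnd. apply Al2; auto.
  pose proof (Abnd (D u) HDu).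
  rewrite Rmult_assoc. apply Rmult_le_compat_l. unfold c0; pose proof (cpos 0); lra. auto.
Qed.

Lemma Mo_sym : sym_op (Mo a c).
Proof.
  intros u v Hu Hv. rewrite !Mo_eq.
  change (fun n => c n * A (D u) n) with (D (A (D u))).
  change (fun n => c n * A (D v) n) with (D (A (D v))).
  assert (HDu := D_l2 u Hu). assert (HDv := D_l2 v Hv).
  assert (HA : forall w, l2 w -> l2 (A w)) by (intros; apply Al2; auto).
  rewrite D_sym by auto. rewrite Asym by auto. rewrite <- D_sym by auto. auto.
Qed.

Lemma Mo_ip u : l2 u -> l2inner (Mo a c u) u = l2inner (A (D u)) (D u).
Proof.
  intro Hu. rewrite Mo_eq. change (fun n => c n * A (D u) n) with (D (A (D u))).
  apply D_sym; auto. apply Al2; auto. apply D_l2; auto.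
Qed.

Lemma Mo_coer u : l2 u -> k1 * nsq (D u) <= l2inner (Mo a c u) u.
Proof. intro Hu. rewrite Mo_ip by auto. apply (Aop_coer a K2 k1); auto. apply D_l2; auto. Qed.

Lemma Mo_upper u : l2 u -> l2inner (Mo a c u) u <= sqrt K2 * nsq (D u).
Proof.
  intro Hu. rewrite Mo_ip by auto. assert (HDu := D_l2 u Hu).
  assert (HA : l2 (A (D u))) by (apply Al2; auto).
  eapply Rle_trans. apply Rle_abs. eapply Rle_trans. apply ip_abs; auto.
  pose proof (Abnd (D u) HDu).
  rewrite <- l2norm_sq by auto. pose proof (l2norm_ge0 (D u)). pose proof (l2norm_ge0 (A (D u))).
  replace (sqrt K2 * l2norm (D u) ^ 2) with ((sqrt K2 * l2norm (D u)) * l2norm (D u)) by ring.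
  apply Rmult_le_compat_r; auto.
Qed.

Theorem final_abstract :
  exists C, 0 < C /\
      (forall u, l2 u ->
         (forall n, ex_series (fun m => c n * c m * a n m * u m)) /\
         l2 (Mo a c u) /\
         l2norm (Mo a c u) <= C * l2norm u /\
         l2norm (Mo a c u) <= C * l2norm (cmul c u)) /\
      (forall u v x y, l2 u -> l2 v ->
         Mo a c (fun n => x * u n + y * v n)
         = (fun n => x * Mo a c u n + y * Mo a c v n)) /\
      (forall u v, l2 u -> l2 v ->
         l2inner (Mo a c u) v = l2inner u (Mo a c v)) /\
      (forall u, l2 u ->
         / C * (l2norm (cmul c u)) ^ 2 <= l2inner (Mo a c u) u) /\
      (exists S : (nat -> R) -> (nat -> R),
         pos_bounded_op S /\
         (forall u, l2 u -> S (S u) = Mo a c u) /\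
         (forall T : (nat -> R) -> (nat -> R),
            pos_bounded_op T ->
            (forall u, l2 u -> T (T u) = Mo a c u) ->
            forall u, l2 u -> T u = S u) /\
         (forall u, l2 u ->
            / C * l2norm (cmul c u) <= l2norm (S u) /\
            l2norm (S u) <= C * l2norm (cmul c u))).
Proof.
  assert (Hc0 : 0 < c0) by (apply cpos).
  set (ka := sqrt K2 + 1). set (kl := k1 / (1 + k1)).
  assert (Hka : 1 <= ka) by (unfold ka; pose proof (sqrt_pos K2); lra).
  assert (Hkl : 0 < kl <= k1 /\ kl < 1).
  { unfold kl. split; [split|].
    apply Rdiv_lt_0_compat; lra.
    apply Rmult_le_reg_r with (1 + k1). lra. unfold Rdiv. rewrite Rmult_assoc, Rinv_l by lra. nra.
    apply Rmult_lt_reg_r with (1 + k1). lra. unfold Rdiv. rewrite Rmult_assoc, Rinv_l by lra. lra. }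
  set (C := (1 + c0) ^ 2 * ka / kl).
  assert (HC1 : (1 + c0) ^ 2 * ka <= C).
  { unfold C. unfold Rdiv. rewrite <- (Rmult_1_r ((1 + c0) ^ 2 * ka)) at 1.
    apply Rmult_le_compat_l. pose proof (pow2_ge_0 (1 + c0)). nra.
    rewrite <- Rinv_1. apply Rinv_le_contravar; lra. }
  assert (HCpos : 0 < C).
  { unfold C. apply Rdiv_lt_0_compat; [|lra]. pose proof (pow2_ge_0 (1 + c0)). nra. }
  assert (HCinv : / C <= kl).
  { unfold C. unfold Rdiv. rewrite Rinv_mult, Rinv_inv.
    assert (/ ((1 + c0) ^ 2 * ka) <= 1).
    { rewrite <- Rinv_1. apply Rinv_le_contravar. lra. nra. }
    assert (0 < / ((1 + c0) ^ 2 * ka)). { apply Rinv_0_lt_compat. nra. }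
    nra. }
  assert (Hka2 : sqrt K2 <= ka) by (unfold ka; lra).
  assert (HcC : c0 * sqrt K2 <= C) by (pose proof (sqrt_pos K2); nra).
  assert (HcC2 : c0 * sqrt K2 * c0 <= C) by (pose proof (sqrt_pos K2); nra).
  assert (HkaC : ka <= C) by nra.
  exists C. split; auto.
  split; [|split; [|split; [|split]]].
  - intros u Hu. split; [|split; [|split]].
    + intro n. assert (Hr : ex_series (fun m => c n * (a n m * D u m))).
      { apply ex_series_Rscal. apply l2_prod. apply (row_l2 a K2); auto. apply D_l2; auto. }
      revert Hr. apply ex_series_Rext. intro m. change (D u m) with (c m * u m). ring.
    + apply Mo_l2; auto.
    + eapply Rle_trans. apply Mo_bndD; auto. pose proof (D_bnd u Hu).
      pose proof (l2norm_ge0 u). pose proof (sqrt_pos K2). pose proof (l2norm_ge0 (D u)).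
      assert (c0 * sqrt K2 * l2norm (D u) <= c0 * sqrt K2 * (c0 * l2norm u)) by (apply Rmult_le_compat_l; nra).
      nra.
    + eapply Rle_trans. apply Mo_bndD; auto. apply Rmult_le_compat_r. apply l2norm_ge0. auto.
  - intros. apply Mo_lin; auto.
  - intros. apply Mo_sym; auto.
  - intros u Hu. pose proof (Mo_coer u Hu). fold D. rewrite l2norm_sq by (apply D_l2; auto).
    pose proof (nsq_ge0 (D u) (D_l2 u Hu)).
    assert (/ C * nsq (D u) <= k1 * nsq (D u)) by (apply Rmult_le_compat_r; lra). lra.
  - destruct (sqrt_thm (Mo a c) (c0 * sqrt K2 * c0)) as [S [HS [HSS HSu]]].
    + pose proof (sqrt_pos K2). nra.
    + apply Mo_l2.
    + apply Mo_lin.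
    + intros u Hu. eapply Rle_trans. apply Mo_bndD; auto.
      replace (c0 * sqrt K2 * c0 * l2norm u) with ((c0 * sqrt K2) * (c0 * l2norm u)) by ring.
      apply Rmult_le_compat_l. pose proof (sqrt_pos K2). nra. apply D_bnd; auto.
    + apply Mo_sym.
    + intros u Hu. pose proof (Mo_coer u Hu). pose proof (nsq_ge0 (D u) (D_l2 u Hu)). nra.
    + exists S. split; [auto|split; [auto|split; [auto|]]].
      intros u Hu. destruct HS as [Sl2 [Slin [_ [Ssym Spos]]]].
      assert (E : l2norm (S u) ^ 2 = l2inner (Mo a c u) u).
      { rewrite l2norm_sq by auto. rewrite nsq_ip. rewrite Ssym by auto. rewrite HSS by auto.
        apply ip_sym. }
      pose proof (Mo_coer u Hu). pose proof (Mo_upper u Hu). fold D.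
      assert (HD := D_l2 u Hu). rewrite <- l2norm_sq in H, H0 by auto.
      pose proof (l2norm_ge0 (D u)). pose proof (l2norm_ge0 (S u)).
      set (x := l2norm (D u)) in *. set (y := l2norm (S u)) in *.
      pose proof (Rinv_0_lt_compat C HCpos).
      split.
      * destruct (Rle_or_lt (/ C * x) y) as [|Hlt]; auto. exfalso.
        assert (y ^ 2 < (/ C * x) ^ 2) by (apply pow_lt_compat_l; [split; auto; apply Rmult_le_pos; lra| lia] || nra).
        assert ((/ C * x) ^ 2 <= kl * x ^ 2).
        { replace ((/ C * x) ^ 2) with ((/ C) ^ 2 * x ^ 2) by ring. apply Rmult_le_compat_r. apply pow2_ge_0.
          assert (/ C * / C <= kl * 1). apply Rmult_le_compat; lra. nra. }
        assert (kl * x ^ 2 <= k1 * x ^ 2) by (apply Rmult_le_compat_r; [apply pow2_ge_0| lra]).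
        lra.
      * destruct (Rle_or_lt y (C * x)) as [|Hlt]; auto. exfalso.
        assert (0 <= C * x) by (apply Rmult_le_pos; lra).
        assert ((C * x) ^ 2 < y ^ 2) by nra.
        assert (sqrt K2 * x ^ 2 <= (C * x) ^ 2).
        { replace ((C * x) ^ 2) with (C ^ 2 * x ^ 2) by ring. apply Rmult_le_compat_r. apply pow2_ge_0.
          assert (C <= C ^ 2) by nra. lra. }
        lra.
Qed.
End Final.

Definition clamp (H x : R) : R := Rmax (- H) (Rmin x 0).

Lemma clamp_val H x : 0 < H ->
  (x < - H /\ clamp H x = - H) \/ (- H <= x <= 0 /\ clamp H x = x) \/ (0 < x /\ clamp H x = 0).
Proof.
  intro HH. unfold clamp. destruct (Rle_lt_dec x 0).
  - rewrite Rmin_left by auto. destruct (Rle_lt_dec (- H) x).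
    + rewrite Rmax_right by auto. right; left. split; auto.
    + rewrite Rmax_left by lra. left. split; auto.
  - rewrite Rmin_right by lra. rewrite Rmax_right by lra. right; right. split; auto.
Qed.

Lemma clamp_in H x : 0 < H -> - H <= clamp H x <= 0.
Proof. intro HH. destruct (clamp_val H x HH) as [[? ->]|[[? ->]|[? ->]]]; lra. Qed.

Lemma clamp_id H x : 0 < H -> - H <= x <= 0 -> clamp H x = x.
Proof. intros HH Hx. destruct (clamp_val H x HH) as [[? ->]|[[? ->]|[? ->]]]; lra. Qed.

Lemma clamp_lip H x y : 0 < H -> Rabs (clamp H y - clamp H x) <= Rabs (y - x).
Proof.
  intro HH. destruct (clamp_val H x HH) as [[? ->]|[[? ->]|[? ->]]];
  destruct (clamp_val H y HH) as [[? ->]|[[? ->]|[? ->]]];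
  unfold Rabs; repeat destruct Rcase_abs; lra.
Qed.

Definition Ct (h : R -> R) := forall x, continuous h x.

Lemma cc_cont H p : 0 < H -> cont_on_cc (- H) 0 p -> Ct (fun x => p (clamp H x)).
Proof.
  intros HH Hc x. apply continuity_pt_filterlim.
  unfold continuity_pt, continue_in, limit1_in, limit_in. intros eps Heps.
  destruct (Hc (clamp H x) (clamp_in H x HH) eps Heps) as [d [Hd Hy]].
  exists d. split; auto. intros y [_ Hyx]. simpl in *. unfold R_dist in *.
  apply Hy. apply clamp_in; auto. eapply Rle_lt_trans. apply clamp_lip; auto. auto.
Qed.

Lemma cont_cc H h : Ct h -> cont_on_cc (- H) 0 h.
Proof.
  intros Hc x _ eps Heps.
  pose proof (proj2 (continuity_pt_filterlim h x) (Hc x)) as Hp.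
  destruct (Hp eps Heps) as [d [Hd Hy]].
  exists d. split; auto. intros y _ Hyx.
  destruct (Req_dec x y) as [->|Hne]. rewrite Rminus_diag, Rabs_R0. lra.
  apply (Hy y). split. split; auto. exact I. simpl. unfold R_dist. auto.
Qed.

Lemma clamp_cont H : 0 < H -> Ct (clamp H).
Proof.
  intro HH. apply (cc_cont H (fun x => x) HH).
  intros x _ eps Heps. exists eps. split; auto.
Qed.

Lemma pt_cont H p : 0 < H -> (forall x, - H <= x <= 0 -> continuous p x) -> Ct (fun x => p (clamp H x)).
Proof.
  intros HH Hp x. apply continuous_comp. apply clamp_cont; auto. apply Hp. apply clamp_in; auto.
Qed.

Lemma Ct_mult f1 f2 : Ct f1 -> Ct f2 -> Ct (fun x => f1 x * f2 x).
Proof. intros H1 H2 x. apply (continuous_mult f1 f2); auto. Qed.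
Lemma Ct_plus f1 f2 : Ct f1 -> Ct f2 -> Ct (fun x => f1 x + f2 x).
Proof. intros H1 H2 x. apply (continuous_plus f1 f2); auto. Qed.
Lemma Ct_const k : Ct (fun _ => k).
Proof. intro x. apply continuous_const. Qed.
Lemma Ct_sum (h : nat -> R -> R) N : (forall m, Ct (h m)) -> Ct (fun x => sum_f_R0 (fun m => h m x) N).
Proof. intro Hh. induction N; simpl. auto. apply Ct_plus; auto. Qed.

Lemma sum_scal_l (k : R) (h : nat -> R) N : sum_f_R0 (fun m => k * h m) N = k * sum_f_R0 h N.
Proof. induction N; simpl. auto. rewrite IHN. ring. Qed.

Section Integ.
Variable H : R.
Hypothesis HH : 0 < H.

Lemma Ct_exRI h : Ct h -> ex_RInt h (- H) 0.
Proof. intro Hc. apply (ex_RInt_continuous (V := R_CompleteNormedModule)). intros; apply Hc. Qed.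

Lemma RI_scal k (h : R -> R) : Ct h -> RInt (fun r => k * h r) (- H) 0 = k * RInt h (- H) 0.
Proof. intro Hc. apply (RInt_scal h (- H) 0 k). apply Ct_exRI; auto. Qed.

Lemma RI_plus (h1 h2 : R -> R) : Ct h1 -> Ct h2 ->
  RInt (fun r => h1 r + h2 r) (- H) 0 = RInt h1 (- H) 0 + RInt h2 (- H) 0.
Proof. intros. apply (RInt_plus h1 h2); apply Ct_exRI; auto. Qed.

Lemma RI_sum (h : nat -> R -> R) N : (forall m, Ct (h m)) ->
  RInt (fun r => sum_f_R0 (fun m => h m r) N) (- H) 0 = sum_f_R0 (fun m => RInt (h m) (- H) 0) N.
Proof.
  intro Hc. induction N; simpl. auto.
  rewrite RI_plus; auto. rewrite IHN. auto. apply Ct_sum; auto.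
Qed.

Lemma RI_ext_int (h1 h2 : R -> R) : (forall r, - H <= r <= 0 -> h1 r = h2 r) -> RInt h1 (- H) 0 = RInt h2 (- H) 0.
Proof.
  intro E. apply RInt_ext. intros x Hx. rewrite Rmin_left in Hx by lra. rewrite Rmax_right in Hx by lra.
  apply E. lra.
Qed.

Lemma RI_le (h1 h2 : R -> R) : Ct h1 -> Ct h2 -> (forall r, - H <= r <= 0 -> h1 r <= h2 r) ->
  RInt h1 (- H) 0 <= RInt h2 (- H) 0.
Proof.
  intros. apply RInt_le. lra. apply Ct_exRI; auto. apply Ct_exRI; auto. intros; apply H2; lra.
Qed.
End Integ.

Lemma sum_ebas_gen (h : nat -> R) k N : (k <= N)%nat -> sum_f_R0 (fun m => h m * ebas k m) N = h k.
Proof.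
  induction 1. apply sum_ebas. rewrite tech5, IHle. unfold ebas.
  replace (S m =? k)%nat with false by (symmetry; apply Nat.eqb_neq; lia). ring.
Qed.

Section SL.
Variables (H g c_low c_up : R) (rho : R -> R) (f : nat -> R -> R).
Hypothesis HH : 0 < H.
Hypothesis Hg : 0 < g.
Hypothesis Hsm : smooth rho.
Hypothesis Hcl : 0 < c_low.
Hypothesis Hcu : 0 < c_up.
Hypothesis Hrho : forall r, - H <= r <= 0 -> c_low <= rho r <= c_up.
Hypothesis Hdr : forall r, - H <= r <= 0 -> c_low <= - Derive rho r.
Hypothesis Hfc : forall n, cont_on_cc (- H) 0 (f n).
Hypothesis Hn1 : forall n, RInt (fun r => f n r * f n r * weight g rho r) (- H) 0 = 1.
Hypothesis Horth : forall n m, n <> m -> RInt (fun r => f n r * f m r * weight g rho r) (- H) 0 = 0.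
Hypothesis Hpars : forall h : R -> R, cont_on_cc (- H) 0 h ->
     is_series (fun n => (RInt (fun r => h r * f n r * weight g rho r) (- H) 0) ^ 2)
               (RInt (fun r => h r ^ 2 * weight g rho r) (- H) 0).

Definition F n x := f n (clamp H x).
Definition wt r := - g * Derive rho r.
Definition Qc x := rho (clamp H x) / wt (clamp H x).
Definition amat n m := RInt (fun r => f n r * f m r * rho r) (- H) 0.

Lemma CtF n : Ct (F n).
Proof. apply cc_cont; auto. Qed.

Lemma Ct_rho : Ct rho.
Proof. intro x. exact (ex_derive_continuous (Derive_n rho 0) x (Hsm 0%nat x)). Qed.

Lemma Ct_D : Ct (Derive rho).
Proof.
  intro x. exact (ex_derive_continuous (Derive_n rho 1) x (Hsm 1%nat x)).
Qed.

Lemma Ct_wt : Ct wt.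
Proof. unfold wt. apply Ct_mult. apply Ct_const. apply Ct_D. Qed.

Lemma wt_low r : - H <= r <= 0 -> g * c_low <= wt r.
Proof. intro Hr. unfold wt. pose proof (Hdr r Hr). nra. Qed.

Lemma Ct_Qc : Ct Qc.
Proof.
  unfold Qc. apply (pt_cont H (fun x => rho x / wt x) HH).
  intros x Hx. apply continuity_pt_filterlim.
  apply (continuity_pt_div rho wt x).
  apply continuity_pt_filterlim. apply Ct_rho.
  apply continuity_pt_filterlim. apply Ct_wt.
  pose proof (wt_low x Hx). nra.
Qed.

Lemma weight_eq r : - H <= r <= 0 -> weight g rho r = wt r.
Proof.
  intro Hr. unfold weight, N2, wt. pose proof (Hrho r Hr). field. lra.
Qed.

Lemma rho_eq r : - H <= r <= 0 -> rho r = Qc r * wt r.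
Proof.
  intro Hr. unfold Qc. rewrite clamp_id by auto. pose proof (wt_low r Hr). field. nra.
Qed.

Lemma F_eq n r : - H <= r <= 0 -> f n r = F n r.
Proof. intro Hr. unfold F. rewrite clamp_id; auto. Qed.

Lemma Dmax : exists Dm, c_low <= Dm /\ forall r, - H <= r <= 0 -> - Derive rho r <= Dm.
Proof.
  destruct (continuity_ab_maj (fun r => - Derive rho r) (- H) 0) as [Mx [HM HMx]].
  lra. intros x _. apply continuity_pt_opp. apply continuity_pt_filterlim. apply Ct_D.
  exists (- Derive rho Mx). split. apply Hdr; auto. auto.
Qed.

Definition q2 := c_up / (g * c_low).

Lemma Qc_up x : Qc x <= q2.
Proof.
  unfold Qc, q2. pose proof (clamp_in H x HH) as Hc. set (y := clamp H x) in *.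
  pose proof (wt_low y Hc). pose proof (Hrho y Hc).
  unfold Rdiv. apply Rle_trans with (c_up * / wt y).
  apply Rmult_le_compat_r. left; apply Rinv_0_lt_compat; nra. lra.
  apply Rmult_le_compat_l. lra. apply Rinv_le_contravar. nra. lra.
Qed.

Lemma Qc_low : exists q1, 0 < q1 /\ forall x, q1 <= Qc x.
Proof.
  destruct Dmax as [Dm [HDm HD]].
  exists (c_low / (g * Dm)). split. apply Rdiv_lt_0_compat; nra.
  intro x. unfold Qc. pose proof (clamp_in H x HH) as Hc. set (y := clamp H x) in *.
  pose proof (wt_low y Hc). pose proof (Hrho y Hc). pose proof (HD y Hc).
  assert (wt y <= g * Dm) by (unfold wt; nra).
  unfold Rdiv. apply Rle_trans with (c_low * / wt y).
  apply Rmult_le_compat_l. lra. apply Rinv_le_contravar. nra. lra.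
  apply Rmult_le_compat_r. left; apply Rinv_0_lt_compat; nra. lra.
Qed.

Lemma Qc_nonneg x : 0 <= Qc x.
Proof. destruct Qc_low as [q1 [Hq1 Hq]]. pose proof (Hq x). lra. Qed.

Ltac ct := repeat (first [ apply CtF | apply Ct_wt | apply Ct_Qc | apply Ct_D | apply Ct_rho | apply Ct_const
                         | apply Ct_mult | apply Ct_plus | apply Ct_sum; intro ]).

Lemma ortho n m : RInt (fun r => F n r * F m r * wt r) (- H) 0 = ebas n m.
Proof.
  unfold ebas. destruct (m =? n)%nat eqn:E.
  - apply Nat.eqb_eq in E. subst. rewrite <- (Hn1 n). apply (RI_ext_int H HH). intros r Hr.
    rewrite weight_eq, !F_eq by auto. auto.
  - apply Nat.eqb_neq in E. transitivity (RInt (fun r => f n r * f m r * weight g rho r) (- H) 0).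
    apply (RI_ext_int H HH). intros r Hr. rewrite weight_eq, !F_eq by auto. auto.
    apply Horth. auto.
Qed.

Lemma amat_eq n m : amat n m = RInt (fun r => Qc r * F m r * F n r * wt r) (- H) 0.
Proof.
  unfold amat. apply (RI_ext_int H HH). intros r Hr. rewrite rho_eq, !F_eq by auto. ring.
Qed.

Lemma amat_sym n m : amat n m = amat m n.
Proof. unfold amat. apply (RI_ext_int H HH). intros; ring. Qed.

Definition Fu (u : nat -> R) N r := sum_f_R0 (fun m => u m * F m r) N.

Lemma Ct_Fu u N : Ct (Fu u N).
Proof. unfold Fu. ct. Qed.

Lemma IFk u N k : (k <= N)%nat -> RInt (fun r => F k r * Fu u N r * wt r) (- H) 0 = u k.
Proof.
  intro Hk. rewrite (RInt_ext _ (fun r => sum_f_R0 (fun m => u m * (F k r * F m r * wt r)) N)).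
  2:{ intros r _. unfold Fu. 
      replace (F k r * sum_f_R0 (fun m => u m * F m r) N * wt r)
        with ((F k r * wt r) * sum_f_R0 (fun m => u m * F m r) N) by ring.
      rewrite <- sum_scal_l. apply sum_eq. intros; ring. }
  rewrite RI_sum by (intro; ct).
  rewrite (sum_eq _ (fun m => u m * ebas k m)). apply sum_ebas_gen; auto.
  intros m _. rewrite RI_scal by ct. rewrite ortho. auto.
Qed.

Lemma IFuFu u N : RInt (fun r => Fu u N r * Fu u N r * wt r) (- H) 0 = sum_f_R0 (fun m => u m ^ 2) N.
Proof.
  rewrite (RInt_ext _ (fun r => sum_f_R0 (fun k => u k * (F k r * Fu u N r * wt r)) N)).
  2:{ intros r _. unfold Fu at 1.
      replace (sum_f_R0 (fun m => u m * F m r) N * Fu u N r * wt r)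
        with ((Fu u N r * wt r) * sum_f_R0 (fun m => u m * F m r) N) by ring.
      rewrite <- sum_scal_l. apply sum_eq. intros; ring. }
  rewrite RI_sum by (intro; generalize (Ct_Fu u N); intro; ct; auto).
  apply sum_eq. intros k Hk. rewrite RI_scal by (generalize (Ct_Fu u N); intro; ct; auto).
  rewrite IFk by auto. ring.
Qed.

Definition Gf (u : nat -> R) N r := Qc r * Fu u N r.

Lemma Ct_Gf u N : Ct (Gf u N).
Proof. unfold Gf. apply Ct_mult. apply Ct_Qc. apply Ct_Fu. Qed.

Lemma coefG' u N n : RInt (fun r => Gf u N r * F n r * wt r) (- H) 0 = sum_f_R0 (fun m => amat n m * u m) N.
Proof.
  rewrite (RInt_ext _ (fun r => sum_f_R0 (fun m => u m * (Qc r * F m r * F n r * wt r)) N)).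
  2:{ intros r _. unfold Gf, Fu.
      replace (Qc r * sum_f_R0 (fun m => u m * F m r) N * F n r * wt r)
        with ((Qc r * F n r * wt r) * sum_f_R0 (fun m => u m * F m r) N) by ring.
      rewrite <- sum_scal_l. apply sum_eq. intros; ring. }
  rewrite RI_sum by (intro; ct).
  apply sum_eq. intros m _. rewrite RI_scal by ct. rewrite amat_eq. ring.
Qed.

Lemma coefG u N n : RInt (fun r => Gf u N r * f n r * weight g rho r) (- H) 0 = sum_f_R0 (fun m => amat n m * u m) N.
Proof.
  rewrite <- coefG'. apply (RI_ext_int H HH). intros r Hr. rewrite weight_eq, F_eq by auto. auto.
Qed.

Lemma aup_SL (u : nat -> R) N P :
  sum_f_R0 (fun n => (sum_f_R0 (fun m => amat n m * u m) N) ^ 2) P <= q2 ^ 2 * sum_f_R0 (fun m => u m ^ 2) N.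
Proof.
  assert (HP := Hpars (Gf u N) (cont_cc H _ (Ct_Gf u N))).
  rewrite (sum_eq _ (fun n => (RInt (fun r => Gf u N r * f n r * weight g rho r) (- H) 0) ^ 2)).
  2:{ intros. rewrite coefG. auto. }
  eapply Rle_trans. apply psum_le_series. intro; apply pow2_ge_0. eexists; eauto.
  rewrite (is_series_unique _ _ HP).
  rewrite (RI_ext_int H HH _ (fun r => Gf u N r ^ 2 * wt r)) by (intros r Hr; rewrite weight_eq; auto).
  rewrite <- IFuFu. rewrite <- RI_scal by (generalize (Ct_Fu u N); intro; ct; auto).
  apply (RI_le H HH). generalize (Ct_Gf u N); intro; ct; auto. generalize (Ct_Fu u N); intro; ct; auto.
  intros r Hr. unfold Gf. pose proof (wt_low r Hr). pose proof (Qc_up r). pose proof (Qc_nonneg r).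
  pose proof (pow2_ge_0 (Fu u N r)).
  assert (Qc r ^ 2 <= q2 ^ 2) by nra.
  assert (0 < g * c_low) by (apply Rmult_lt_0_compat; lra).
  assert (0 <= Fu u N r ^ 2 * wt r) by (apply Rmult_le_pos; lra).
  replace ((Qc r * Fu u N r) ^ 2 * wt r) with (Qc r ^ 2 * (Fu u N r ^ 2 * wt r)) by ring.
  replace (q2 ^ 2 * (Fu u N r * Fu u N r * wt r)) with (q2 ^ 2 * (Fu u N r ^ 2 * wt r)) by ring.
  apply Rmult_le_compat_r; auto.
Qed.

Lemma alow_SL q1 : (forall x, q1 <= Qc x) -> forall (u : nat -> R) N,
  q1 * sum_f_R0 (fun m => u m ^ 2) N <= sum_f_R0 (fun n => u n * sum_f_R0 (fun m => amat n m * u m) N) N.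
Proof.
  intros Hq u N.
  rewrite (sum_eq (fun n => u n * sum_f_R0 (fun m => amat n m * u m) N) (fun n => u n * RInt (fun r => Gf u N r * F n r * wt r) (- H) 0)).
  2:{ intros. rewrite coefG'. auto. }
  rewrite (sum_eq (fun n => u n * RInt (fun r => Gf u N r * F n r * wt r) (- H) 0) (fun n => RInt (fun r => u n * (Gf u N r * F n r * wt r)) (- H) 0)).
  2:{ intros. rewrite RI_scal. auto. generalize (Ct_Gf u N); intro; ct; auto. }
  rewrite <- RI_sum by (intro; generalize (Ct_Gf u N); intro; ct; auto).
  rewrite <- IFuFu. rewrite <- RI_scal by (generalize (Ct_Fu u N); intro; ct; auto).
  apply (RI_le H HH). generalize (Ct_Fu u N); intro; ct; auto.
  apply Ct_sum. intro. generalize (Ct_Gf u N); intro; ct; auto.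
  intros r Hr.
  replace (sum_f_R0 (fun m => u m * (Gf u N r * F m r * wt r)) N)
    with (Qc r * (Fu u N r * Fu u N r * wt r)).
  2:{ unfold Gf, Fu.
      replace (Qc r * (sum_f_R0 (fun m => u m * F m r) N * sum_f_R0 (fun m => u m * F m r) N * wt r))
        with ((Qc r * sum_f_R0 (fun m => u m * F m r) N * wt r) * sum_f_R0 (fun m => u m * F m r) N) by ring.
      rewrite <- sum_scal_l. apply sum_eq. intros; ring. }
  pose proof (wt_low r Hr). pose proof (Hq r). pose proof (pow2_ge_0 (Fu u N r)).
  assert (0 < g * c_low) by (apply Rmult_lt_0_compat; lra).
  assert (0 <= Fu u N r * Fu u N r * wt r) by (apply Rmult_le_pos; [nra|lra]).
  apply Rmult_le_compat_r; auto.
Qed.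

Lemma N0_diag N0 : (forall r, - H <= r <= 0 -> N2 g rho r = N0) ->
  0 < N0 /\ forall n m, amat n m * N0 = ebas n m.
Proof.
  intro HN. assert (HN0 : 0 < N0).
  { rewrite <- (HN (- H)) by lra. unfold N2. pose proof (Hrho (- H) ltac:(lra)). pose proof (Hdr (- H) ltac:(lra)).
    apply Rdiv_lt_0_compat; nra. }
  split; auto. intros n m. rewrite <- ortho.
  assert (E : amat n m = RInt (fun r => F n r * F m r * rho r) (- H) 0).
  { unfold amat. apply (RI_ext_int H HH). intros r Hr. rewrite !F_eq by auto. auto. }
  rewrite E, Rmult_comm, <- RI_scal by ct.
  apply (RI_ext_int H HH). intros r Hr. rewrite <- (HN r Hr).
  unfold wt, N2. pose proof (Hrho r Hr). field. lra.
Qed.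
End SL.

Theorem proposition3p2 :
  forall (H g c_low c_up : R) (rho : R -> R) (c : nat -> R) (f : nat -> R -> R),
    0 < H -> 0 < g ->
    smooth rho ->
    0 < c_low -> 0 < c_up ->
    (forall r, - H <= r <= 0 -> c_low <= rho r <= c_up) ->
    (forall r, - H <= r <= 0 -> c_low <= - Derive rho r) ->
    SL_eigen_family H g rho c f ->
    exists C, 0 < C /\
      (* (i) M is a bounded linear operator on l^2 with |Mu| <= C |(c_n u_n)| *)
      (forall u, l2 u ->
         (forall n, ex_series (fun m => Mentry H rho c f n m * u m)) /\
         l2 (Mop H rho c f u) /\
         l2norm (Mop H rho c f u) <= C * l2norm u /\
         l2norm (Mop H rho c f u) <= C * l2norm (cmul c u)) /\
      (forall u v a b, l2 u -> l2 v ->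
         Mop H rho c f (fun n => a * u n + b * v n)
         = (fun n => a * Mop H rho c f u n + b * Mop H rho c f v n)) /\
      (* (ii) symmetry *)
      (forall u v, l2 u -> l2 v ->
         l2inner (Mop H rho c f u) v = l2inner u (Mop H rho c f v)) /\
      (* (iii) coercivity *)
      (forall u, l2 u ->
         / C * (l2norm (cmul c u)) ^ 2 <= l2inner (Mop H rho c f u) u) /\
      (* (iv) unique positive square root, with two-sided bounds *)
      (exists S : (nat -> R) -> (nat -> R),
         pos_bounded_op S /\
         (forall u, l2 u -> S (S u) = Mop H rho c f u) /\
         (forall T : (nat -> R) -> (nat -> R),
            pos_bounded_op T ->
            (forall u, l2 u -> T (T u) = Mop H rho c f u) ->
            forall u, l2 u -> T u = S u) /\
         (forall u, l2 u ->
            / C * l2norm (cmul c u) <= l2norm (S u) /\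
            l2norm (S u) <= C * l2norm (cmul c u))) /\
      (* (v) constant N^2 => M diagonal *)
      (forall N0 : R, (forall r, - H <= r <= 0 -> N2 g rho r = N0) ->
         (forall n, Mentry H rho c f n n = c n ^ 2 / N0) /\
         (forall n m, n <> m -> Mentry H rho c f n m = 0)).
Proof.
  intros H g c_low c_up rho c f HH Hg Hsm Hcl Hcu Hrho Hdr HSL.
  destruct HSL as [cpos [cdec [Hfc [_ [_ [_ [Hn1 [Horth Hpars]]]]]]]].
  destruct (Qc_low H g c_low c_up rho HH Hg Hsm Hcl Hrho Hdr) as [q1 [Hq1 Hq]].
  assert (Hq2 : 0 < q2 g c_low c_up) by (unfold q2; apply Rdiv_lt_0_compat; nra).
  destruct (final_abstract (amat H rho f) c (q2 g c_low c_up ^ 2) q1) as [C [HC [Hi [Hl [Hs [Hco Hsq]]]]]].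
  - apply pow_lt; auto.
  - auto.
  - apply amat_sym; auto.
  - apply (aup_SL H g c_low c_up rho f HH Hg Hsm Hcl Hcu Hrho Hdr Hfc Hn1 Horth Hpars).
  - apply (alow_SL H g c_low c_up rho f HH Hg Hsm Hcl Hrho Hdr Hfc Hn1 Horth q1 Hq).
  - auto.
  - auto.
  - exists C. split; auto. split; [exact Hi|]. split; [exact Hl|]. split; [exact Hs|].
    split; [exact Hco|]. split; [exact Hsq|].
    intros N0 HN.
    destruct (N0_diag H g c_low c_up rho f HH Hg Hsm Hcl Hrho Hdr Hfc Hn1 Horth N0 HN) as [HN0 Hd].
    split.
    + intro n. unfold Mentry. pose proof (Hd n n). unfold ebas in H0. rewrite Nat.eqb_refl in H0.
      change (RInt (fun r => f n r * f n r * rho r) (- H) 0) with (amat H rho f n n).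
      assert (amat H rho f n n = / N0) by (apply Rmult_eq_reg_r with N0; [rewrite H0; field|]; lra).
      rewrite H1. field. lra.
    + intros n m Hnm. unfold Mentry. pose proof (Hd n m). unfold ebas in H0.
      replace (m =? n)%nat with false in H0 by (symmetry; apply Nat.eqb_neq; auto).
      change (RInt (fun r => f n r * f m r * rho r) (- H) 0) with (amat H rho f n m).
      assert (amat H rho f n m = 0) by (apply Rmult_eq_reg_r with N0; [rewrite H0; ring|]; lra).
      rewrite H1. ring.
Qed.
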